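(* Let $G=G_{\pm}(x)=3+2\{\cos(2\pi x)\pm\cos(12\pi x)\pm\cos(14\pi x)\}$ on $\mathbb{T}=\mathbb{R}/\mathbb{Z}$ (either sign), and let $Z$ be the set of local maximum points of $G$ in $\mathbb{T}$. Then for every $t>0$, $$\operatorname{Var}(G^t)<2\sum_{\zeta\in Z}G^t(\zeta),$$ where $\operatorname{Var}$ denotes total variation over one period $\mathbb{T}$. In particular $\operatorname{Var}(G_{\pm})<74$.
   Context: $\operatorname{Var}(\psi)=\operatorname{Var}(\psi,\mathbb{T})$ is the total variation of the $1$-periodic function $\psi$ over one period. *)

(* Defs.v *)
From HB Require Import structures.
From mathcomp Require Import all_boot all_order all_algebra.
From mathcomp Require Import all_classical all_reals all_analysis.
Set Implicit Arguments. Unset Strict Implicit. Unset Printing Implicit Defensive.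
Import Order.TTheory GRing.Theory Num.Theory.
Local Open Scope ring_scope.

Definition sgn {R : realType} (s : bool) : R := if s then 1 else -1.

Definition Gpm {R : realType} (s : bool) (x : R) : R :=
  3 + 2 * (cos (2 * pi * x) + sgn s * cos (12 * pi * x)
           + sgn s * cos (14 * pi * x)).

Definition is_local_max {R : realType} (f : R -> R) (x : R) : Prop :=
  exists2 e : R, 0 < e & forall y, `|y - x| < e -> f y <= f x.

(* local maximum points in T = R/Z, represented in [0,1) *)
Definition local_max_T {R : realType} (f : R -> R) (x : R) : Prop :=
  0 <= x < 1 /\ is_local_max f x.

(* Main.v *)
Require Import Defs.
From HB Require Import structures.
From mathcomp Require Import all_boot all_order all_algebra.
From mathcomp Require Import all_classical all_reals all_analysis.
From mathcomp Require Import ring lra zify.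
Set Implicit Arguments. Unset Strict Implicit. Unset Printing Implicit Defensive.
Import Order.TTheory GRing.Theory Num.Theory.
Local Open Scope ring_scope.
Import numFieldNormedType.Exports.
Section G.
Variable R : realType.
Definition sg (e : bool) (y : R) := if e then 0 < y else y < 0.

Lemma cont_of (f df : R -> R) : (forall x : R, is_derive x (1:R) f (df x)) -> continuous f.
Proof.
move=> hd x; apply: differentiable_continuous; apply/derivable1_diffP.
by case: (hd x).
Qed.

Lemma incr_of (f df : R -> R) a b : (forall x : R, is_derive x (1:R) f (df x)) ->
  (forall x, a < x < b -> 0 < df x) ->
  forall x y, a <= x -> x < y -> y <= b -> f x < f y.
Proof.
move=> hd hp; apply: gtr0_derive1_incr.
- by move=> x _; case: (hd x).
- by move=> x; rewrite in_itv /= => hx; case: (hd x) => _ hv; rewrite derive1E hv; apply: hp.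
- by apply: continuous_subspaceT; exact: cont_of hd.
Qed.

Lemma decr_of (f df : R -> R) a b : (forall x : R, is_derive x (1:R) f (df x)) ->
  (forall x, a < x < b -> df x < 0) ->
  forall x y, a <= x -> x < y -> y <= b -> f y < f x.
Proof.
move=> hd hp; apply: ltr0_derive1_decr.
- by move=> x _; case: (hd x).
- by move=> x; rewrite in_itv /= => hx; case: (hd x) => _ hv; rewrite derive1E hv; apply: hp.
- by apply: continuous_subspaceT; exact: cont_of hd.
Qed.

Lemma mono_gen (e : bool) (f df : R -> R) a b : (forall x : R, is_derive x (1:R) f (df x)) ->
  (forall x, a < x < b -> sg e (df x)) ->
  forall x y, a <= x -> x < y -> y <= b -> if e then f x < f y else f y < f x.
Proof.
case: e => hd hp x y ax xy yb.
- exact: (incr_of hd hp ax xy yb).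
- exact: (decr_of hd hp ax xy yb).
Qed.

Lemma root_dec (f df : R -> R) a b : (forall x : R, is_derive x (1:R) f (df x)) ->
  (forall x, a <= x <= b -> df x < 0) -> 0 < f a -> f b < 0 -> a < b ->
  exists r, [/\ a < r, r < b, (forall x, a <= x -> x < r -> 0 < f x) &
     (forall x, r < x -> x <= b -> f x < 0)].
Proof.
move=> hd hdf fa fb ab.
have dec : forall x y, a <= x -> x < y -> y <= b -> f y < f x.
  apply: (decr_of hd) => x /andP[h1 h2]; apply: hdf; rewrite !ltW //.
have hv : Num.min (f a) (f b) <= 0 <= Num.max (f a) (f b).
  by rewrite ge_min le_max (ltW fb) (ltW fa) orbT.
have [r] := @IVT R f a b 0 (ltW ab) (continuous_subspaceT (cont_of hd)) hv.
rewrite in_itv /= => /andP[ar rb] fr0.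
have ar' : a < r.
  by rewrite lt_neqAle ar andbT; apply/eqP => er; move: fa; rewrite er fr0 ltxx.
have rb' : r < b.
  by rewrite lt_neqAle rb andbT; apply/eqP => er; move: fb; rewrite -er fr0 ltxx.
exists r; split => //.
- by move=> x ax xr; rewrite -fr0; apply: dec => //; exact: ltW.
- by move=> x rx xb; rewrite -fr0; apply: dec => //; exact: ltW.
Qed.

Lemma root_gen (e : bool) (f df : R -> R) a b : (forall x : R, is_derive x (1:R) f (df x)) ->
  (forall x, a <= x <= b -> sg (~~ e) (df x)) -> sg e (f a) -> sg (~~ e) (f b) -> a < b ->
  exists r, [/\ a < r, r < b, (forall x, a <= x -> x < r -> sg e (f x)) &
     (forall x, r < x -> x <= b -> sg (~~ e) (f x))].
Proof.
case: e => /= hd hdf fa fb ab.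
- exact: (root_dec hd).
- have hd' : forall x : R, is_derive x (1:R) (fun y => - f y) (- df x).
    by move=> x; apply: is_deriveN.
  have s1 : forall x, a <= x <= b -> - df x < 0.
    by move=> x hx; rewrite oppr_lt0; apply: hdf.
  have s2 : 0 < - f a by rewrite oppr_gt0.
  have s3 : - f b < 0 by rewrite oppr_lt0.
  have [r [h1 h2 h3 h4]] := root_dec hd' s1 s2 s3 ab.
  exists r; split => // x h h'.
    by rewrite -oppr_gt0; apply: h3.
  by rewrite -oppr_lt0; apply: h4.
Qed.

Definition mono_hyp (f : R -> R) (b : nat -> R) (n : nat) (st : bool) :=
  forall i, (i < n)%N -> forall x y, b i <= x -> x < y -> y <= b i.+1 ->
    if odd i != st then f x < f y else f y < f x.

Lemma chain_le (b : nat -> R) n : (forall i, (i < n)%N -> b i < b i.+1) ->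
  forall i j, (i <= j <= n)%N -> b i <= b j.
Proof.
move=> hb i; elim=> [|j IH] /andP[ij jn].
  by move: ij; rewrite leqn0 => /eqP ->.
move: ij; rewrite leq_eqVlt => /orP[/eqP -> //|ij].
apply: le_trans (ltW (hb j jn)); apply: IH.
by rewrite -ltnS ij /= ltnW.
Qed.

Lemma chain_lt (b : nat -> R) n : (forall i, (i < n)%N -> b i < b i.+1) ->
  forall i j, (i < j <= n)%N -> b i < b j.
Proof.
move=> hb i j /andP[ij jn].
apply: lt_le_trans (hb i (leq_trans ij jn)) _.
by apply: (chain_le hb); rewrite ij jn.
Qed.

Lemma tv_pieces (f : R -> R) (b : nat -> R) (st : bool) n :
  (forall i, (i < n)%N -> b i < b i.+1) -> mono_hyp f b n st ->
  total_variation (b 0) (b n) f = (\sum_(0 <= i < n) `|f (b i.+1) - f (b i)|)%:E.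
Proof.
elim: n => [|n IH] hb hm.
  by rewrite total_variationxx big_geq.
have b0n : b 0 <= b n by apply: (chain_le hb); rewrite leq0n /= leqnSn.
have bnn : b n <= b n.+1 by apply/ltW/hb.
rewrite (total_variationD f b0n bnn) IH; last 2 first.
- by move=> i hi; apply: hb; rewrite ltnS ltnW.
- by move=> i hi; apply: hm; rewrite ltnS ltnW.
rewrite big_nat_recr //= EFinD; congr (_ + _)%E.
move: (hm n (ltnSn n)); case: (odd n != st) => h.
- rewrite nondecreasing_total_variation //.
    by rewrite gtr0_norm // subr_gt0; apply: h => //; exact: hb.
  move=> x y; rewrite !in_itv /= => /andP[x1 x2] /andP[y1 y2].
  rewrite le_eqVlt => /predU1P[-> //|xy]; exact/ltW/h.
- rewrite -total_variationN nondecreasing_total_variation //.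
    rewrite ltr0_norm ?subr_lt0; first by rewrite opprB opprK addrC.
    by apply: h => //; exact: hb.
  move=> x y; rewrite !in_itv /= => /andP[x1 x2] /andP[y1 y2].
  rewrite le_eqVlt => /predU1P[-> //|xy]; rewrite lerN2; exact/ltW/h.
Qed.

Lemma find_piece (b : nat -> R) n x : (forall i, (i < n)%N -> b i < b i.+1) ->
  b 0 <= x -> x < b n -> exists i, [/\ (i < n)%N, b i <= x & x < b i.+1].
Proof.
move=> hb; elim: n hb => [|n IH] hb x0 xn; first by move: (lt_le_trans xn x0); rewrite ltxx.
have [xl|xg] := ltP x (b n).
  have [i [h1 h2 h3]] := IH (fun i hi => hb i (ltnW hi)) x0 xl.
  by exists i; split => //; rewrite ltnW.
by exists n; split.
Qed.


Lemma locmax_char (f : R -> R) (b : nat -> R) (st : bool) n :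
  ~~ odd n -> b 0 = 0 -> b n = 1 -> (forall i, (i < n)%N -> b i < b i.+1) ->
  mono_hyp f b n st -> (forall y, f (y + 1) = f y) ->
  forall x, (0 <= x < 1 /\ is_local_max f x) <-> exists i, [/\ (i < n)%N, odd i = st & x = b i].
Proof.
move=> ne b0 bn hb hm per x; split.
- move=> [/andP[x0 x1] [e e0 he]].
  have x0' : b 0 <= x by rewrite b0.
  have x1' : x < b n by rewrite bn.
  have [i [hi bx xb]] := find_piece hb x0' x1'.
  have up : odd i != st -> False.
    move=> inc; set d := Num.min e (b i.+1 - x).
    have d0 : 0 < d by rewrite lt_min e0 subr_gt0 xb.
    have d1 : d <= e by rewrite ge_min lexx.
    have d2 : d <= b i.+1 - x by rewrite ge_min lexx orbT.
    have h1 := he (x + d / 2).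
    have h2 : `|x + d / 2 - x| < e by rewrite ltr_distl; apply/andP; split; lra.
    move: (hm i hi x (x + d / 2) bx); rewrite inc => H.
    have := H ltac:(lra) ltac:(lra); have := h1 h2; lra.
  have hst : odd i = st.
    have : ~~ (odd i != st) by apply/negP => h; exact: up h.
    by rewrite negbK => /eqP.
  exists i; split => //.
  move: bx; rewrite le_eqVlt => /predU1P[-> //|bx].
  exfalso; set d := Num.min e (x - b i).
  have d0 : 0 < d by rewrite lt_min e0 subr_gt0 bx.
  have d1 : d <= e by rewrite ge_min lexx.
  have d2 : d <= x - b i by rewrite ge_min lexx orbT.
  have h1 := he (x - d / 2).
  have h2 : `|x - d / 2 - x| < e by rewrite ltr_distl; apply/andP; split; lra.
  move: (hm i hi (x - d / 2) x); rewrite hst eqxx /= => H.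
  have := H ltac:(lra) ltac:(lra) (ltW xb); have := h1 h2; lra.
- move=> [i [hi hst ->]]; split.
    apply/andP; split.
      by rewrite -b0; apply: (chain_le hb); rewrite leq0n ltnW.
    by rewrite -bn; apply: (chain_lt hb); rewrite hi leqnn.
  have hdec : forall x y, b i <= x -> x < y -> y <= b i.+1 -> f y < f x.
    by move: (hm i hi); rewrite hst eqxx.
  case: i hi hst hdec => [|k] hi hst hdec.
  + case: n ne bn hb hm hi => [|m] // ne bn hb hm _.
    have hinc : forall x y, b m <= x -> x < y -> y <= b m.+1 -> f x < f y.
      by move: (hm m (ltnSn m)); rewrite -hst /=; move: ne => /=; case: (odd m).
    have p1 := hb 0%N isT.
    have p2 := hb m (ltnSn m).
    exists (Num.min (b 1 - b 0) (b m.+1 - b m)); first by rewrite lt_min !subr_gt0 p1 p2.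
    move=> y; rewrite ltr_distl => /andP[y1 y2].
    have e1 : Num.min (b 1 - b 0) (b m.+1 - b m) <= b 1 - b 0 by rewrite ge_min lexx.
    have e2 : Num.min (b 1 - b 0) (b m.+1 - b m) <= b m.+1 - b m by rewrite ge_min lexx orbT.
    have [hy|hy] := leP (b 0) y.
      move: hy; rewrite le_eqVlt => /predU1P[-> //|hy].
      by apply/ltW/hdec => //; lra.
    rewrite -per; have f10 : f (b m.+1) = f (b 0) by rewrite bn b0 -{1}(add0r 1) per.
    rewrite -f10; apply/ltW/hinc; lra.
  + have hinc : forall x y, b k <= x -> x < y -> y <= b k.+1 -> f x < f y.
      by move: (hm k (ltnW hi)); rewrite -hst /=; case: (odd k).
    have p1 := hb k.+1 hi.
    have p2 := hb k (ltnW hi).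
    exists (Num.min (b k.+2 - b k.+1) (b k.+1 - b k)); first by rewrite lt_min !subr_gt0 p1 p2.
    move=> y; rewrite ltr_distl => /andP[y1 y2].
    have e1 : Num.min (b k.+2 - b k.+1) (b k.+1 - b k) <= b k.+2 - b k.+1 by rewrite ge_min lexx.
    have e2 : Num.min (b k.+2 - b k.+1) (b k.+1 - b k) <= b k.+1 - b k by rewrite ge_min lexx orbT.
    have [hy|hy] := leP (b k.+1) y.
      move: hy; rewrite le_eqVlt => /predU1P[-> //|hy].
      by apply/ltW/hdec => //; lra.
    by apply/ltW/hinc; lra.
Qed.

Lemma negSodd j (s : bool) : ~~ (odd j.+1 != s) = (odd j != s).
Proof. by rewrite /=; case: (odd j); case: s. Qed.

Lemma c_structure (s : bool) (f df ddf : R -> R) (A B : nat -> R) :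
  (forall x : R, is_derive x (1:R) f (df x)) ->
  (forall x : R, is_derive x (1:R) df (ddf x)) ->
  B 0 = -1 -> A 7 = 1 ->
  (forall j, (0 < j < 7)%N -> A j < B j) ->
  (forall j, (j < 7)%N -> B j < A j.+1) ->
  (forall j, (j < 7)%N -> forall c, B j <= c -> c <= A j.+1 -> sg (odd j != s) (df c)) ->
  (forall j, (0 < j < 7)%N -> forall c, A j <= c -> c <= B j -> sg (odd j != s) (ddf c)) ->
  exists rho : nat -> R, [/\ rho 0 = -1, rho 7 = 1,
     (forall j, (0 < j < 7)%N -> A j < rho j < B j),
     (forall j, (j < 7)%N -> rho j < rho j.+1) &
     (forall j, (j < 7)%N -> forall x y, rho j <= x -> x < y -> y <= rho j.+1 ->
        if odd j != s then f x < f y else f y < f x)].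
Proof.
move=> hd hdd B0 A7 hAB hBA hgap hiso.
have hr : forall j, exists r : R,
   ((0 < j < 7)%N -> [/\ A j < r, r < B j,
      (forall x, A j <= x -> x < r -> sg (~~ (odd j != s)) (df x)) &
      (forall x, r < x -> x <= B j -> sg (odd j != s) (df x))]) /\
   (j = 0%N -> r = -1) /\ (j = 7%N -> r = 1).
  case=> [|k]; first by exists (-1).
  have [k6|k6] := ltnP k 6; last first.
    by exists 1; split => // /andP[_]; rewrite ltnS ltnNge k6.
  have j7 : (0 < k.+1 < 7)%N by [].
  have [r [h1 h2 h3 h4]] : exists r, [/\ A k.+1 < r, r < B k.+1,
      (forall x, A k.+1 <= x -> x < r -> sg (~~ (odd k.+1 != s)) (df x)) &
      (forall x, r < x -> x <= B k.+1 -> sg (~~ ~~ (odd k.+1 != s)) (df x))].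
    apply: (root_gen hdd).
    - by move=> x /andP[x1 x2]; rewrite negbK; apply: hiso.
    - rewrite negSodd; apply: (hgap k (ltnW k6)) => //.
      exact: ltW (hBA k (ltnW k6)).
    - rewrite negbK; apply: (hgap k.+1 k6) => //.
      exact: ltW (hBA k.+1 k6).
    - exact: hAB.
  exists r; split; last by split => // -[e]; move: k6; rewrite e.
  move=> _; split => // x hx hx'; rewrite -[odd k.+1 != s]negbK; exact: h4.
have [rho Hrho] := choice hr.
have r0 : rho 0 = -1 by case: (Hrho 0%N) => _ [-> ].
have r7 : rho 7 = 1 by case: (Hrho 7%N) => _ [_ ->].
have rin : forall j, (0 < j < 7)%N -> A j < rho j < B j.
  by move=> j hj; case: (Hrho j) => /(_ hj) [h1 h2 _ _] _; rewrite h1 h2.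
have lB : forall j, (j < 7)%N -> rho j <= B j.
  case=> [|j] hj; first by rewrite r0 B0.
  by have /andP[_ /ltW] := rin j.+1 hj.
have lA : forall j, (0 < j <= 7)%N -> A j <= rho j.
  move=> j /andP[j0]; rewrite leq_eqVlt => /orP[/eqP ->|j7]; first by rewrite r7 A7.
  by have /andP[/ltW] := rin j ltac:(by rewrite j0 j7).
exists rho; split => //.
- move=> j hj; apply: (le_lt_trans (lB j hj)); apply: (lt_le_trans (hBA j hj)).
  exact: lA.
- move=> j hj; apply: (mono_gen hd).
  move=> x /andP[x1 x2].
  have [xB|xB] := leP x (B j).
    case: j hj x1 x2 xB => [|j] hj x1 x2 xB.
      by move: (lt_le_trans x1 xB); rewrite r0 B0 ltxx.
    by case: (Hrho j.+1) => /(_ hj) [_ _ _ h4] _; apply: h4.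
  have [xA|xA] := leP x (A j.+1).
    by apply: hgap => //; apply: ltW.
  have hj1 : (0 < j.+1 < 7)%N.
    rewrite /= ltn_neqAle hj andbT; apply/eqP => e.
    by move: (lt_trans xA x2); rewrite e r7 A7 ltxx.
  case: (Hrho j.+1) => /(_ hj1) [_ _ h3 _] _.
  by rewrite -negSodd; apply: h3 => //; apply: ltW.
Qed.

Definition xb (rho : nat -> R) (i : nat) : R :=
  if (i <= 7)%N then acos (rho (7 - i)%N) / (2 * pi) else 1 - acos (rho (i - 7)%N) / (2 * pi).

Lemma ler_cos' (x y : R) : 0 <= x <= pi -> 0 <= y <= pi -> x <= y -> cos y <= cos x.
Proof.
move=> hx hy xy; rewrite leNgt ltr_cos ?in_itv //= -leNgt //.
Qed.

Lemma ltr_cos' (x y : R) : 0 <= x <= pi -> 0 <= y <= pi -> x < y -> cos y < cos x.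
Proof. by move=> hx hy xy; rewrite ltr_cos ?in_itv. Qed.

Lemma K_gt0 : 0 < 2 * pi :> R.
Proof. by rewrite mulr_gt0 // pi_gt0. Qed.

Lemma Kdiv (a : R) : 2 * pi * (a / (2 * pi)) = a.
Proof. by rewrite mulrC divfK // gt_eqF // K_gt0. Qed.

Lemma cos1m (x : R) : cos (2 * pi * (1 - x)) = cos (2 * pi * x).
Proof.
have -> : 2 * pi * (1 - x) = - (2 * pi * x) + pi *+ 2 by rewrite mulr2n; ring.
by rewrite cosD2pi cosN.
Qed.

Lemma x_structure (s : bool) (g : R -> R) (rho : nat -> R) :
  rho 0 = -1 -> rho 7 = 1 -> (forall j, (j < 7)%N -> rho j < rho j.+1) ->
  (forall j, (j < 7)%N -> forall x y, rho j <= x -> x < y -> y <= rho j.+1 ->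
       if odd j != s then g x < g y else g y < g x) ->
  [/\ xb rho 0 = 0, xb rho 14 = 1, (forall i, (i < 14)%N -> xb rho i < xb rho i.+1),
      mono_hyp (fun x => g (cos (2 * pi * x))) (xb rho) 14 (~~ s) &
      (forall i, (i <= 14)%N ->
         cos (2 * pi * xb rho i) = rho (if (i <= 7)%N then (7 - i)%N else (i - 7)%N))].
Proof.
move=> r0 r7 hr hm.
have rle : forall j k, (j <= k <= 7)%N -> rho j <= rho k := chain_le hr.
have rlt : forall j k, (j < k <= 7)%N -> rho j < rho k := chain_lt hr.
have rin : forall j, (j <= 7)%N -> -1 <= rho j <= 1.
  move=> j hj; apply/andP; split; [rewrite -r0 | rewrite -r7]; apply: rle; rewrite ?hj //=.
have rinI : forall j, (j <= 7)%N -> rho j \in `[(-1 : R), 1].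
  by move=> j hj; rewrite in_itv /= rin.
have ac0 : forall j, (j <= 7)%N -> 0 <= acos (rho j) <= pi.
  by move=> j hj; rewrite acos_ge0 ?acos_lepi ?rin.
have acK : forall j, (j <= 7)%N -> cos (acos (rho j)) = rho j.
  by move=> j hj; rewrite acosK // rinI.
have aclt : forall j k, (j < k <= 7)%N -> acos (rho k) < acos (rho j).
  move=> j k /andP[jk k7].
  have j7 : (j <= 7)%N by apply: leq_trans (ltnW jk) k7.
  have hj := ac0 j j7; have hk := ac0 k k7.
  have := rlt j k ltac:(by rewrite jk k7).
  by rewrite -{1}(acK j j7) -{1}(acK k k7) ltr_cos ?in_itv ?hj ?hk.
have hK := K_gt0.
have bl : forall i, (i <= 7)%N -> xb rho i = acos (rho (7 - i)%N) / (2 * pi).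
  by move=> i hi; rewrite /xb hi.
have br : forall i, (7 <= i)%N -> xb rho i = 1 - acos (rho (i - 7)%N) / (2 * pi).
  move=> i; rewrite leq_eqVlt => /orP[/eqP <-|hi]; last by rewrite /xb leqNgt hi.
  rewrite /xb /= r0 acosN1.
  have -> : pi / (2 * pi) = 2^-1 :> R.
    by rewrite invfM mulrCA divff ?mulr1 // gt_eqF // pi_gt0.
  lra.
have bKl : forall i, (i <= 7)%N -> 2 * pi * xb rho i = acos (rho (7 - i)%N).
  by move=> i hi; rewrite bl // Kdiv.
have bKr : forall i, (7 <= i)%N -> 2 * pi * (1 - xb rho i) = acos (rho (i - 7)%N).
  by move=> i hi; rewrite br // opprB addrC subrK Kdiv.
have cosb : forall i, (i <= 14)%N ->
    cos (2 * pi * xb rho i) = rho (if (i <= 7)%N then (7 - i)%N else (i - 7)%N).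
  move=> i hi; case: ifP => hi7.
    by rewrite bKl // acK // leq_subr.
  have h7 : (7 <= i)%N by rewrite ltnW // ltnNge hi7.
  by rewrite -cos1m bKr // acK // leq_subLR.
have mulK : forall u v : R, (u <= v) = (2 * pi * u <= 2 * pi * v).
  by move=> u v; rewrite ler_pM2l.
have mulKlt : forall u v : R, (u < v) = (2 * pi * u < 2 * pi * v).
  by move=> u v; rewrite ltr_pM2l.
split.
- by rewrite bl // subn0 r7 acos1 mul0r.
- by rewrite br // /= r7 acos1 mul0r subr0.
- move=> i hi; have [hi7|hi7] := ltnP i 7.
    rewrite mulKlt bKl ?(ltnW hi7) // bKl //; apply: aclt.
    by apply/andP; split; lia.
  rewrite (br i hi7) br ?(leq_trans hi7) //.
  rewrite ltrD2l ltrN2 mulKlt !Kdiv; apply: aclt.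
  by apply/andP; split; lia.
- move=> i hi x y bx xy yb.
  have [hi7|hi7] := ltnP i 7.
    have i6 : (i <= 6)%N by [].
    move: bx yb; rewrite mulK bKl ?(ltnW hi7) // => bx.
    rewrite mulK bKl // subSS => yb.
    have e7 : (7 - i = (6 - i).+1)%N by rewrite subSn.
    have txy : 2 * pi * x < 2 * pi * y by rewrite -mulKlt.
    have := ac0 (7 - i)%N (leq_subr _ _); have := ac0 (6 - i)%N (leq_trans (leq_subr _ _) (leqnSn 6)).
    move: bx yb txy; set X := 2 * pi * x; set Y := 2 * pi * y.
    set a1 := acos (rho (7 - i)%N); set a2 := acos (rho (6 - i)%N).
    move=> bx yb txy /andP[h1 h2] /andP[h3 h4].
    have tx : 0 <= X <= pi by apply/andP; split; lra.
    have ty : 0 <= Y <= pi by apply/andP; split; lra.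
    have cyx : cos (2 * pi * y) < cos (2 * pi * x) by apply: ltr_cos' => //; rewrite -mulKlt.
    have cx : cos (2 * pi * x) <= rho (6 - i).+1.
      rewrite -e7 -acK ?leq_subr //; apply: ler_cos' => //; exact: ac0 (leq_subr _ _).
    have cy : rho (6 - i)%N <= cos (2 * pi * y).
      rewrite -acK ?(leq_trans (leq_subr _ _) (leqnSn 6)) //; apply: ler_cos' => //.
      exact: ac0 (leq_trans (leq_subr _ _) (leqnSn 6)).
    have := hm (6 - i)%N (leq_ltn_trans (leq_subr _ _) (ltnSn 6)) _ _ cy cyx cx.
    rewrite oddB //= /=.
    move=> H; clear hm; move: H.
    by case: (odd i); case: s.
  have i7 : (i - 7 < 7)%N by lia.
  have i7' : (i.+1 - 7 = (i - 7).+1)%N by lia.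
  have hi1 : (7 <= i.+1)%N by lia.
  have i8 : (i.+1 - 7 <= 7)%N by lia.
  have bx' : 2 * pi * (1 - x) <= acos (rho (i - 7)%N).
    by rewrite -bKr // -mulK lerD2l lerN2.
  have yb' : acos (rho (i.+1 - 7)%N) <= 2 * pi * (1 - y).
    by rewrite -bKr // -mulK lerD2l lerN2.
  have txy : 2 * pi * (1 - y) < 2 * pi * (1 - x).
    by rewrite -mulKlt ltrD2l ltrN2.
  have := ac0 (i - 7)%N (ltnW i7); have := ac0 (i.+1 - 7)%N i8.
  rewrite -(cos1m x) -(cos1m y).
  move: bx' yb' txy; set X := 2 * pi * (1 - x); set Y := 2 * pi * (1 - y).
  set a1 := acos (rho (i - 7)%N); set a2 := acos (rho (i.+1 - 7)%N).
  move=> bx' yb' txy /andP[h1 h2] /andP[h3 h4].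
  have tx : 0 <= X <= pi by apply/andP; split; lra.
  have ty : 0 <= Y <= pi by apply/andP; split; lra.
  have cxy : cos X < cos Y by apply: ltr_cos'.
  have cx : rho (i - 7)%N <= cos X.
    rewrite -acK ?(ltnW i7) //; apply: ler_cos' => //; exact: ac0 (ltnW i7).
  have cy : cos Y <= rho (i - 7).+1.
    rewrite -i7' -(acK _ i8).
    by apply: ler_cos' => //; exact: ac0.
  have := hm (i - 7)%N i7 _ _ cx cxy cy.
  rewrite oddB //= addbT.
  move=> H; clear hm; move: H.
  by case: (odd i); case: s.
- exact: cosb.
Qed.

Definition P6 (c : R) := 32 * c ^+ 6 - 48 * c ^+ 4 + 18 * c ^+ 2 - 1.
Definition P7 (c : R) := 64 * c ^+ 7 - 112 * c ^+ 5 + 56 * c ^+ 3 - 7 * c.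
Definition dP6 (c : R) := 192 * c ^+ 5 - 192 * c ^+ 3 + 36 * c.
Definition dP7 (c : R) := 448 * c ^+ 6 - 560 * c ^+ 4 + 168 * c ^+ 2 - 7.
Definition ddP6 (c : R) := 960 * c ^+ 4 - 576 * c ^+ 2 + 36.
Definition ddP7 (c : R) := 2688 * c ^+ 5 - 2240 * c ^+ 3 + 336 * c.
Definition Pc (s : bool) (c : R) := 3 + 2 * (c + sgn s * P6 c + sgn s * P7 c).
Definition dPc (s : bool) (c : R) := 2 * (1 + sgn s * dP6 c + sgn s * dP7 c).
Definition ddPc (s : bool) (c : R) := 2 * (sgn s * ddP6 c + sgn s * ddP7 c).

Lemma Pc_deriv s (x : R) : is_derive x (1:R) (Pc s) (dPc s x).
Proof.
rewrite /Pc /dPc /dP6 /dP7 /P6 /P7.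
apply: trigger_derive; rewrite /GRing.scale /=; ring.
Qed.

Lemma dPc_deriv s (x : R) : is_derive x (1:R) (dPc s) (ddPc s x).
Proof.
rewrite /dPc /ddPc /dP6 /dP7 /ddP6 /ddP7.
apply: trigger_derive; rewrite /GRing.scale /=; ring.
Qed.

Lemma cosS n (t : R) : cos (n.+2%:R * t) = 2 * cos (n.+1%:R * t) * cos t - cos (n%:R * t).
Proof.
have -> : n.+2%:R * t = n.+1%:R * t + t by rewrite -[n.+2]addn1 natrD; ring.
have -> : n%:R * t = n.+1%:R * t - t by rewrite -[n.+1]addn1 natrD; ring.
by rewrite cosD cosB; ring.
Qed.

Lemma cos6 (t : R) : cos (6 * t) = P6 (cos t).
Proof.
rewrite !cosS mulr1n mul1r mulr0n mul0r cos0 /P6; ring.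
Qed.

Lemma cos7 (t : R) : cos (7 * t) = P7 (cos t).
Proof.
rewrite !cosS mulr1n mul1r mulr0n mul0r cos0 /P7; ring.
Qed.

Lemma GpmE s (x : R) : Gpm s x = Pc s (cos (2 * pi * x)).
Proof.
rewrite /Gpm /Pc.
have -> : 12 * pi * x = 6 * (2 * pi * x) by ring.
have -> : 14 * pi * x = 7 * (2 * pi * x) by ring.
by rewrite cos6 cos7.
Qed.

Lemma sum_abs_eq (F : nat -> R) (st : bool) n :
  (forall i, (i < n)%N -> if odd i != st then F i < F i.+1 else F i.+1 < F i) ->
  \sum_(0 <= i < n) `|F i.+1 - F i| =
  \sum_(0 <= i < n) (if odd i != st then F i.+1 - F i else F i - F i.+1).
Proof.
move=> H; apply: eq_big_nat => i /andP[_ hi]; move: (H i hi).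
case: (odd i != st) => h.
  by rewrite gtr0_norm // subr_gt0.
by rewrite ltr0_norm ?subr_lt0 // opprB.
Qed.

Lemma sum14 (F : nat -> R) (st : bool) :
  (forall i, (i < 14)%N -> if odd i != st then F i < F i.+1 else F i.+1 < F i) ->
  F 14%N = F 0%N -> (forall i, (i < 14)%N -> 0 < F i) ->
  \sum_(0 <= i < 14) `|F i.+1 - F i| < 2 * \sum_(0 <= i < 14 | odd i == st) F i.
Proof.
move=> H F14 p; rewrite (sum_abs_eq H).
have p0 := p 0%N isT; have p1 := p 1%N isT; have p2 := p 2%N isT.
have p3 := p 3%N isT; have p4 := p 4%N isT; have p5 := p 5%N isT.
have p6 := p 6%N isT; have p7 := p 7%N isT; have p8 := p 8%N isT.
have p9 := p 9%N isT; have p10 := p 10%N isT; have p11 := p 11%N isT.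
have p12 := p 12%N isT; have p13 := p 13%N isT.
clear H p; case: st; rewrite /index_iota /= !big_cons !big_nil /= ?F14; lra.
Qed.

Definition W (s : bool) (rho : nat -> R) (i : nat) :=
  Pc s (rho (if (i <= 7)%N then (7 - i)%N else (i - 7)%N)).
Definition bound14 (s : bool) (rho : nat -> R) :=
  \sum_(0 <= i < 14) (if odd i != ~~ s then W s rho i.+1 - W s rho i
                      else W s rho i - W s rho i.+1) < 74.

Lemma main_gen (s : bool) (rho : nat -> R) : rho 0%N = -1 -> rho 7%N = 1 ->
  (forall j, (j < 7)%N -> rho j < rho j.+1) ->
  (forall j, (j < 7)%N -> forall x y, rho j <= x -> x < y -> y <= rho j.+1 ->
     if odd j != s then Pc s x < Pc s y else Pc s y < Pc s x) ->
  bound14 s rho -> (forall c, -1 <= c -> c <= 1 -> 0 < Pc s c) ->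
  (forall t : R, 0 < t ->
     exists2 Z : seq R, uniq Z /\ (forall x, x \in Z <-> local_max_T (@Gpm R s) x) &
       (total_variation 0 1 (fun x : R => powR (Gpm s x) t)
          < (2 * \sum_(z <- Z) powR (Gpm s z) t)%:E)%E)
  /\ (total_variation 0 1 (@Gpm R s) < 74%:E)%E.
Proof.
move=> r0 r7 rinc rmono hb Pp.
have [b0 b14 binc bmono cosb] := x_structure r0 r7 rinc rmono.
set b := xb rho in b0 b14 binc bmono cosb *.
have GE : Gpm s = (fun x => Pc s (cos (2 * pi * x))).
  by apply/funext => x; rewrite GpmE.
have Gmono : mono_hyp (Gpm s) b 14 (~~ s) by rewrite GE.
have Gpos : forall x : R, 0 < Gpm s x.
  by move=> x; rewrite GpmE; apply: Pp; [exact: cos_geN1 | exact: cos_le1].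
have Gper : forall y : R, Gpm s (y + 1) = Gpm s y.
  move=> y; rewrite !GpmE.
  have -> : 2 * pi * (y + 1) = 2 * pi * y + pi *+ 2 by rewrite mulr2n; ring.
  by rewrite cosD2pi.
have G10 : Gpm s (b 14%N) = Gpm s (b 0%N) by rewrite b14 b0 -{1}(add0r 1) Gper.
have bne : forall i j, (i < j <= 14)%N -> b i != b j.
  by move=> i j h; rewrite lt_eqF // (chain_lt binc).
split.
- move=> t t0.
  set f := fun x => powR (Gpm s x) t.
  have fmono : mono_hyp f b 14 (~~ s).
    move=> i hi x y h1 h2 h3; move: (Gmono i hi x y h1 h2 h3).
    by case: (odd i != ~~ s) => h; apply: gt0_ltr_powR => //; rewrite nnegrE ltW.
  exists [seq b i | i <- [seq i <- iota 0 14 | odd i == ~~ s]].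
    split.
      rewrite map_inj_in_uniq ?filter_uniq ?iota_uniq //.
      move=> i j; rewrite !mem_filter !mem_iota add0n.
      move=> /andP[_ /andP[_ hi]] /andP[_ /andP[_ hj]] e.
      case: (ltngtP i j) => // h.
        by move: (bne i j); rewrite h (ltnW hj) e eqxx => /(_ isT).
      by move: (bne j i); rewrite h (ltnW hi) e eqxx => /(_ isT).
    move=> x; rewrite /local_max_T (locmax_char (n := 14) isT b0 b14 binc Gmono Gper x).
    split.
      move/mapP => [i]; rewrite mem_filter mem_iota => /andP[/eqP hs /andP[_ hi]] ->.
      by exists i; split.
    move=> [i [hi hs ->]]; apply/mapP; exists i => //.
    by rewrite mem_filter mem_iota hs eqxx /= hi.
  have -> : total_variation 0 1 f = total_variation (b 0%N) (b 14%N) f by rewrite b0 b14.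
  rewrite (tv_pieces binc fmono) lte_fin big_map big_filter.
  apply: (@sum14 (fun i => f (b i))).
  + move=> i hi; apply: fmono => //; exact: binc.
  + by rewrite /f G10.
  + by move=> i _; apply: powR_gt0.
- have -> : total_variation 0 1 (Gpm s) = total_variation (b 0%N) (b 14%N) (Gpm s).
    by rewrite b0 b14.
  rewrite (tv_pieces binc Gmono) lte_fin (@sum_abs_eq (fun i => Gpm s (b i)) (~~ s)).
    apply: le_lt_trans hb; rewrite le_eqVlt; apply/orP; left; apply/eqP.
    by apply: eq_big_nat => i /andP[_ hi]; rewrite /W !GpmE !cosb ?(ltnW hi).
  by move=> i hi; apply: Gmono => //; exact: binc.
Qed.

Fixpoint bsum (u v : R) (l : seq R) : R :=
  if l is x :: l' then x * v ^+ size l' + u * bsum u v l' else 0.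
Fixpoint allpos (l : seq R) : Prop := if l is x :: l' then 0 < x /\ allpos l' else True.
Lemma bsum_gt0 u v (l : seq R) : 0 <= u -> 0 <= v -> 0 < u + v ->
  l != [::] -> allpos l -> 0 < bsum u v l.
Proof.
move=> u0 v0 uv; elim: l => [|x l IH] // _ [x0 al].
case: l IH al => [|y l] IH al.
  by rewrite /= expr0 mulr1 mulr0 addr0.
have [u0'|un0] := eqVneq u 0.
  rewrite /= u0' mul0r addr0 mulr_gt0 // exprn_gt0 //.
  by move: uv; rewrite u0' add0r.
have up : 0 < u by rewrite lt_def un0.
rewrite [bsum _ _ _]/= ltr_wpDl ?mulr_ge0 ?exprn_ge0 ?(ltW x0) //.
by rewrite mulr_gt0 // IH.
Qed.
Lemma bern (K u v p : R) (l : seq R) : allpos l -> l != [::] ->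
  0 < K -> 0 <= u -> 0 <= v -> 0 < u + v -> K * p = bsum u v l -> 0 < p.
Proof.
move=> al ln K0 u0 v0 uv e.
have : 0 < K * p by rewrite e bsum_gt0.
by rewrite pmulr_rgt0.
Qed.

Lemma Ppos_true_0 (c : R) : ((- 1)) <= c -> c <= ((- 3)/4) -> 0 < Pc true c.
Proof.
move=> h1 h2.
apply: (@bern 128 (4 * c - (- 4)) ((- 3) - 4 * c) _ [:: 128; (1*1000+792); (5*1000+152); (6*1000+272); (3*1000+680); 996; 110; 11]);
  [by repeat split; lra|by []|lra|lra|lra|lra|].
by rewrite /bsum /= /Pc /dPc /ddPc /P6 /P7 /dP6 /dP7 /ddP6 /ddP7 /sgn /=; ring.
Qed.

Lemma Ppos_true_1 (c : R) : ((- 3)/4) <= c -> c <= ((- 1)/2) -> 0 < Pc true c.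
Proof.
move=> h1 h2.
apply: (@bern 128 (4 * c - (- 3)) ((- 2) - 4 * c) _ [:: 11; 44; 600; (2*1000+760); (5*1000+232); (4*1000+832); (2*1000+176); 384]);
  [by repeat split; lra|by []|lra|lra|lra|lra|].
by rewrite /bsum /= /Pc /dPc /ddPc /P6 /P7 /dP6 /dP7 /ddP6 /ddP7 /sgn /=; ring.
Qed.

Lemma Ppos_true_2 (c : R) : ((- 1)/2) <= c -> c <= (0) -> 0 < Pc true c.
Proof.
move=> h1 h2.
apply: (@bern 1 (2 * c - (- 1)) (0 - 2 * c) _ [:: 3; 29; 106; 183; 156; 66; 13; 1]);
  [by repeat split; lra|by []|lra|lra|lra|lra|].
by rewrite /bsum /= /Pc /dPc /ddPc /P6 /P7 /dP6 /dP7 /ddP6 /ddP7 /sgn /=; ring.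
Qed.

Lemma Ppos_true_3 (c : R) : (0) <= c -> c <= (1/4) -> 0 < Pc true c.
Proof.
move=> h1 h2.
apply: (@bern 128 (4 * c - 0) (1 - 4 * c) _ [:: 128; 512; 672; 384; 528; 980; 730; 183]);
  [by repeat split; lra|by []|lra|lra|lra|lra|].
by rewrite /bsum /= /Pc /dPc /ddPc /P6 /P7 /dP6 /dP7 /ddP6 /ddP7 /sgn /=; ring.
Qed.

Lemma Ppos_true_4 (c : R) : (1/4) <= c -> c <= (1/2) -> 0 < Pc true c.
Proof.
move=> h1 h2.
apply: (@bern 128 (4 * c - 1) (2 - 4 * c) _ [:: 183; (1*1000+832); (7*1000+592); (16*1000+712); (21*1000+40); (15*1000+136); (5*1000+760); 896]);
  [by repeat split; lra|by []|lra|lra|lra|lra|].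
by rewrite /bsum /= /Pc /dPc /ddPc /P6 /P7 /dP6 /dP7 /ddP6 /ddP7 /sgn /=; ring.
Qed.

Lemma Ppos_true_5 (c : R) : (1/2) <= c -> c <= (3/4) -> 0 < Pc true c.
Proof.
move=> h1 h2.
apply: (@bern 128 (4 * c - 2) (3 - 4 * c) _ [:: 896; (6*1000+784); (21*1000+280); (35*1000+600); (33*1000+992); (18*1000+312); (5*1000+96); 569]);
  [by repeat split; lra|by []|lra|lra|lra|lra|].
by rewrite /bsum /= /Pc /dPc /ddPc /P6 /P7 /dP6 /dP7 /ddP6 /ddP7 /sgn /=; ring.
Qed.

Lemma Ppos_true_6 (c : R) : (3/4) <= c -> c <= (7/8) -> 0 < Pc true c.
Proof.
move=> h1 h2.
apply: (@bern (16*1000+384) (8 * c - 6) (7 - 8 * c) _ [:: (72*1000+832); (438*1000+592); ((1*1000+92)*1000+0); ((1*1000+446)*1000+928); ((1*1000+96)*1000+408); (479*1000+36); (118*1000+334); (15*1000+19)]);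
  [by repeat split; lra|by []|lra|lra|lra|lra|].
by rewrite /bsum /= /Pc /dPc /ddPc /P6 /P7 /dP6 /dP7 /ddP6 /ddP7 /sgn /=; ring.
Qed.

Lemma Ppos_true_7 (c : R) : (7/8) <= c -> c <= (1) -> 0 < Pc true c.
Proof.
move=> h1 h2.
apply: (@bern (16*1000+384) (8 * c - 7) (8 - 8 * c) _ [:: (15*1000+19); (91*1000+932); (320*1000+624); (799*1000+232); ((1*1000+314)*1000+304); ((1*1000+291)*1000+264); (679*1000+936); (147*1000+456)]);
  [by repeat split; lra|by []|lra|lra|lra|lra|].
by rewrite /bsum /= /Pc /dPc /ddPc /P6 /P7 /dP6 /dP7 /ddP6 /ddP7 /sgn /=; ring.
Qed.

Lemma Ppos_true (c : R) : ((- 1)) <= c -> c <= (1) -> 0 < Pc true c.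
Proof.
move=> h1 h2.
have [?|?] := leP c ((- 3)/4); first by apply: Ppos_true_0; lra.
have [?|?] := leP c ((- 1)/2); first by apply: Ppos_true_1; lra.
have [?|?] := leP c (0); first by apply: Ppos_true_2; lra.
have [?|?] := leP c (1/4); first by apply: Ppos_true_3; lra.
have [?|?] := leP c (1/2); first by apply: Ppos_true_4; lra.
have [?|?] := leP c (3/4); first by apply: Ppos_true_5; lra.
have [?|?] := leP c (7/8); first by apply: Ppos_true_6; lra.
by apply: Ppos_true_7; lra.
Qed.

Lemma gap_true_0_0 (c : R) : ((- 1)) <= c -> c <= ((- 485)/512) -> 0 < dPc true c.
Proof.
move=> h1 h2.
apply: (@bern (((((((54*1000+524)*1000+586)*1000+559)*1000+252)*1000+979)*1000+515)*1000+392) (512 * c - (- 512)) ((- 485) - 512 * c) _ [:: (((((3*1000+940)*1000+649)*1000+673)*1000+949)*1000+184); (((((18*1000+240)*1000+897)*1000+904)*1000+803)*1000+840); (((((33*1000+804)*1000+287)*1000+427)*1000+477)*1000+504); (((((31*1000+415)*1000+103)*1000+152)*1000+717)*1000+824); (((((14*1000+730)*1000+138)*1000+100)*1000+236)*1000+288); (((((2*1000+871)*1000+238)*1000+452)*1000+930)*1000+48); ((((52*1000+167)*1000+20)*1000+732)*1000+159)]);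
  [by repeat split; lra|by []|lra|lra|lra|lra|].
by rewrite /bsum /= /Pc /dPc /ddPc /P6 /P7 /dP6 /dP7 /ddP6 /ddP7 /sgn /=; ring.
Qed.

Lemma gap_true_0 (c : R) : ((- 1)) <= c -> c <= ((- 485)/512) -> 0 < dPc true c.
Proof.
move=> h1 h2.
by apply: gap_true_0_0; lra.
Qed.

Lemma gap_true_1_0 (c : R) : ((- 121)/128) <= c -> c <= ((- 381)/512) -> 0 < - dPc true c.
Proof.
move=> h1 h2.
apply: (@bern ((((((((168*1000+47)*1000+921)*1000+178)*1000+402)*1000+793)*1000+573)*1000+56)*1000+512) (512 * c - (- 484)) ((- 381) - 512 * c) _ [:: ((((41*1000+4)*1000+412)*1000+997)*1000+632); (((((9*1000+680)*1000+996)*1000+220)*1000+614)*1000+656); (((((31*1000+223)*1000+641)*1000+121)*1000+550)*1000+80); (((((37*1000+905)*1000+426)*1000+261)*1000+973)*1000+248); (((((20*1000+477)*1000+457)*1000+393)*1000+535)*1000+344); (((((4*1000+192)*1000+96)*1000+646)*1000+306)*1000+232); ((((28*1000+57)*1000+834)*1000+735)*1000+377)]);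
  [by repeat split; lra|by []|lra|lra|lra|lra|].
by rewrite /bsum /= /Pc /dPc /ddPc /P6 /P7 /dP6 /dP7 /ddP6 /ddP7 /sgn /=; ring.
Qed.

Lemma gap_true_1 (c : R) : ((- 121)/128) <= c -> c <= ((- 381)/512) -> 0 < - dPc true c.
Proof.
move=> h1 h2.
by apply: gap_true_1_0; lra.
Qed.

Lemma gap_true_2_0 (c : R) : ((- 95)/128) <= c -> c <= ((- 165)/512) -> 0 < dPc true c.
Proof.
move=> h1 h2.
apply: (@bern (((((((((13*1000+900)*1000+824)*1000+351)*1000+538)*1000+96)*1000+898)*1000+48)*1000+0)*1000+0) (512 * c - (- 380)) ((- 165) - 512 * c) _ [:: ((((11*1000+11)*1000+144)*1000+577)*1000+24); (((((8*1000+466)*1000+122)*1000+883)*1000+774)*1000+464); (((((42*1000+103)*1000+435)*1000+127)*1000+292)*1000+160); (((((60*1000+317)*1000+76)*1000+642)*1000+228)*1000+480); (((((34*1000+87)*1000+7)*1000+670)*1000+671)*1000+760); (((((6*1000+745)*1000+572)*1000+804)*1000+191)*1000+544); ((((18*1000+717)*1000+471)*1000+137)*1000+919)]);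
  [by repeat split; lra|by []|lra|lra|lra|lra|].
by rewrite /bsum /= /Pc /dPc /ddPc /P6 /P7 /dP6 /dP7 /ddP6 /ddP7 /sgn /=; ring.
Qed.

Lemma gap_true_2 (c : R) : ((- 95)/128) <= c -> c <= ((- 165)/512) -> 0 < dPc true c.
Proof.
move=> h1 h2.
by apply: gap_true_2_0; lra.
Qed.

Lemma gap_true_3_0 (c : R) : ((- 41)/128) <= c -> c <= (117/1024) -> 0 < - dPc true c.
Proof.
move=> h1 h2.
apply: (@bern ((((((((((69*1000+943)*1000+898)*1000+649)*1000+439)*1000+614)*1000+122)*1000+590)*1000+208)*1000+0)*1000+0) (1024 * c - (- 328)) (117 - 1024 * c) _ [:: ((((775*1000+692)*1000+478)*1000+578)*1000+688); (((((443*1000+559)*1000+775)*1000+895)*1000+93)*1000+248); ((((((2*1000+153)*1000+756)*1000+461)*1000+76)*1000+49)*1000+920); ((((((3*1000+562)*1000+130)*1000+899)*1000+801)*1000+896)*1000+960); ((((((2*1000+302)*1000+195)*1000+410)*1000+64)*1000+643)*1000+520); (((((506*1000+666)*1000+28)*1000+992)*1000+851)*1000+728); (((((1*1000+271)*1000+812)*1000+371)*1000+710)*1000+433)]);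
  [by repeat split; lra|by []|lra|lra|lra|lra|].
by rewrite /bsum /= /Pc /dPc /ddPc /P6 /P7 /dP6 /dP7 /ddP6 /ddP7 /sgn /=; ring.
Qed.

Lemma gap_true_3 (c : R) : ((- 41)/128) <= c -> c <= (117/1024) -> 0 < - dPc true c.
Proof.
move=> h1 h2.
by apply: gap_true_3_0; lra.
Qed.

Lemma gap_true_4_0 (c : R) : (119/1024) <= c -> c <= (595/1024) -> 0 < dPc true c.
Proof.
move=> h1 h2.
apply: (@bern ((((((((((104*1000+768)*1000+683)*1000+455)*1000+814)*1000+308)*1000+806)*1000+862)*1000+351)*1000+368)*1000+192) (1024 * c - 119) (595 - 1024 * c) _ [:: ((((975*1000+270)*1000+648)*1000+560)*1000+279); (((((541*1000+650)*1000+613)*1000+753)*1000+908)*1000+658); ((((((2*1000+926)*1000+883)*1000+599)*1000+311)*1000+242)*1000+33); ((((((5*1000+564)*1000+469)*1000+690)*1000+773)*1000+932)*1000+700); ((((((4*1000+233)*1000+136)*1000+443)*1000+15)*1000+954)*1000+377); (((((975*1000+197)*1000+396)*1000+199)*1000+321)*1000+490); (((((1*1000+744)*1000+10)*1000+994)*1000+22)*1000+991)]);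
  [by repeat split; lra|by []|lra|lra|lra|lra|].
by rewrite /bsum /= /Pc /dPc /ddPc /P6 /P7 /dP6 /dP7 /ddP6 /ddP7 /sgn /=; ring.
Qed.

Lemma gap_true_4 (c : R) : (119/1024) <= c -> c <= (595/1024) -> 0 < dPc true c.
Proof.
move=> h1 h2.
by apply: gap_true_4_0; lra.
Qed.

Lemma gap_true_5_0 (c : R) : (597/1024) <= c -> c <= (113/128) -> 0 < - dPc true c.
Proof.
move=> h1 h2.
apply: (@bern ((((((((((7*1000+540)*1000+845)*1000+155)*1000+890)*1000+300)*1000+947)*1000+743)*1000+16)*1000+747)*1000+8) (1024 * c - 597) (904 - 1024 * c) _ [:: (((((2*1000+320)*1000+254)*1000+459)*1000+694)*1000+113); (((((639*1000+419)*1000+576)*1000+872)*1000+944)*1000+240); ((((((3*1000+410)*1000+78)*1000+396)*1000+840)*1000+886)*1000+720); ((((((6*1000+840)*1000+962)*1000+508)*1000+321)*1000+540)*1000+96); ((((((6*1000+89)*1000+431)*1000+270)*1000+886)*1000+862)*1000+848); ((((((2*1000+36)*1000+356)*1000+913)*1000+475)*1000+26)*1000+944); (((((9*1000+48)*1000+662)*1000+540)*1000+25)*1000+856)]);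
  [by repeat split; lra|by []|lra|lra|lra|lra|].
by rewrite /bsum /= /Pc /dPc /ddPc /P6 /P7 /dP6 /dP7 /ddP6 /ddP7 /sgn /=; ring.
Qed.

Lemma gap_true_5 (c : R) : (597/1024) <= c -> c <= (113/128) -> 0 < - dPc true c.
Proof.
move=> h1 h2.
by apply: gap_true_5_0; lra.
Qed.

Lemma gap_true_6_0 (c : R) : (453/512) <= c -> c <= (1) -> 0 < dPc true c.
Proof.
move=> h1 h2.
apply: (@bern ((((((((5*1000+936)*1000+382)*1000+362)*1000+121)*1000+758)*1000+465)*1000+589)*1000+248) (512 * c - 453) (512 - 512 * c) _ [:: ((((63*1000+7)*1000+395)*1000+33)*1000+279); (((((12*1000+593)*1000+382)*1000+656)*1000+57)*1000+856); (((((71*1000+275)*1000+934)*1000+508)*1000+711)*1000+936); (((((162*1000+813)*1000+979)*1000+423)*1000+408)*1000+128); (((((186*1000+50)*1000+501)*1000+429)*1000+690)*1000+368); (((((106*1000+188)*1000+633)*1000+987)*1000+350)*1000+528); (((((24*1000+206)*1000+847)*1000+997)*1000+116)*1000+416)]);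
  [by repeat split; lra|by []|lra|lra|lra|lra|].
by rewrite /bsum /= /Pc /dPc /ddPc /P6 /P7 /dP6 /dP7 /ddP6 /ddP7 /sgn /=; ring.
Qed.

Lemma gap_true_6 (c : R) : (453/512) <= c -> c <= (1) -> 0 < dPc true c.
Proof.
move=> h1 h2.
by apply: gap_true_6_0; lra.
Qed.

Lemma iso_true_1_0 (c : R) : ((- 485)/512) <= c -> c <= ((- 121)/128) -> 0 < - ddPc true c.
Proof.
move=> h1 h2.
apply: (@bern (((137*1000+438)*1000+953)*1000+472) (512 * c - (- 485)) ((- 484) - 512 * c) _ [:: ((((47*1000+374)*1000+746)*1000+824)*1000+761); ((((235*1000+287)*1000+381)*1000+385)*1000+28); ((((467*1000+414)*1000+524)*1000+512)*1000+928); ((((464*1000+266)*1000+716)*1000+116)*1000+96); ((((230*1000+565)*1000+650)*1000+156)*1000+800); ((((45*1000+800)*1000+823)*1000+993)*1000+344)]);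
  [by repeat split; lra|by []|lra|lra|lra|lra|].
by rewrite /bsum /= /Pc /dPc /ddPc /P6 /P7 /dP6 /dP7 /ddP6 /ddP7 /sgn /=; ring.
Qed.

Lemma iso_true_1 (c : R) : ((- 485)/512) <= c -> c <= ((- 121)/128) -> 0 < - ddPc true c.
Proof.
move=> h1 h2.
by apply: iso_true_1_0; lra.
Qed.

Lemma iso_true_2_0 (c : R) : ((- 381)/512) <= c -> c <= ((- 95)/128) -> 0 < ddPc true c.
Proof.
move=> h1 h2.
apply: (@bern (((137*1000+438)*1000+953)*1000+472) (512 * c - (- 381)) ((- 380) - 512 * c) _ [:: ((((19*1000+532)*1000+765)*1000+232)*1000+495); ((((97*1000+669)*1000+685)*1000+180)*1000+4); ((((195*1000+347)*1000+458)*1000+128)*1000+480); ((((195*1000+351)*1000+935)*1000+674)*1000+496); ((((97*1000+676)*1000+411)*1000+484)*1000+928); ((((19*1000+535)*1000+13)*1000+991)*1000+424)]);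
  [by repeat split; lra|by []|lra|lra|lra|lra|].
by rewrite /bsum /= /Pc /dPc /ddPc /P6 /P7 /dP6 /dP7 /ddP6 /ddP7 /sgn /=; ring.
Qed.

Lemma iso_true_2 (c : R) : ((- 381)/512) <= c -> c <= ((- 95)/128) -> 0 < ddPc true c.
Proof.
move=> h1 h2.
by apply: iso_true_2_0; lra.
Qed.

Lemma iso_true_3_0 (c : R) : ((- 165)/512) <= c -> c <= ((- 41)/128) -> 0 < - ddPc true c.
Proof.
move=> h1 h2.
apply: (@bern (((137*1000+438)*1000+953)*1000+472) (512 * c - (- 165)) ((- 164) - 512 * c) _ [:: ((((15*1000+426)*1000+204)*1000+598)*1000+521); ((((77*1000+117)*1000+179)*1000+710)*1000+468); ((((154*1000+205)*1000+322)*1000+96)*1000+288); ((((154*1000+174)*1000+935)*1000+415)*1000+936); ((((77*1000+71)*1000+600)*1000+405)*1000+760); ((((15*1000+411)*1000+11)*1000+974)*1000+144)]);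
  [by repeat split; lra|by []|lra|lra|lra|lra|].
by rewrite /bsum /= /Pc /dPc /ddPc /P6 /P7 /dP6 /dP7 /ddP6 /ddP7 /sgn /=; ring.
Qed.

Lemma iso_true_3 (c : R) : ((- 165)/512) <= c -> c <= ((- 41)/128) -> 0 < - ddPc true c.
Proof.
move=> h1 h2.
by apply: iso_true_3_0; lra.
Qed.

Lemma iso_true_4_0 (c : R) : (117/1024) <= c -> c <= (119/1024) -> 0 < ddPc true c.
Proof.
move=> h1 h2.
apply: (@bern ((((140*1000+737)*1000+488)*1000+355)*1000+328) (1024 * c - 117) (119 - 1024 * c) _ [:: ((((560*1000+713)*1000+657)*1000+36)*1000+617); (((((2*1000+805)*1000+710)*1000+10)*1000+210)*1000+975); (((((5*1000+615)*1000+662)*1000+248)*1000+123)*1000+978); (((((5*1000+619)*1000+863)*1000+158)*1000+423)*1000+54); (((((2*1000+812)*1000+11)*1000+328)*1000+454)*1000+429); ((((562*1000+814)*1000+64)*1000+981)*1000+667)]);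
  [by repeat split; lra|by []|lra|lra|lra|lra|].
by rewrite /bsum /= /Pc /dPc /ddPc /P6 /P7 /dP6 /dP7 /ddP6 /ddP7 /sgn /=; ring.
Qed.

Lemma iso_true_4 (c : R) : (117/1024) <= c -> c <= (119/1024) -> 0 < ddPc true c.
Proof.
move=> h1 h2.
by apply: iso_true_4_0; lra.
Qed.

Lemma iso_true_5_0 (c : R) : (595/1024) <= c -> c <= (597/1024) -> 0 < - ddPc true c.
Proof.
move=> h1 h2.
apply: (@bern ((((140*1000+737)*1000+488)*1000+355)*1000+328) (1024 * c - 595) (597 - 1024 * c) _ [:: (((((1*1000+13)*1000+375)*1000+346)*1000+885)*1000+697); (((((5*1000+72)*1000+320)*1000+297)*1000+498)*1000+451); (((((10*1000+155)*1000+435)*1000+872)*1000+477)*1000+866); (((((10*1000+166)*1000+138)*1000+707)*1000+111)*1000+302); (((((5*1000+88)*1000+374)*1000+251)*1000+231)*1000+845); (((((1*1000+18)*1000+726)*1000+465)*1000+984)*1000+983)]);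
  [by repeat split; lra|by []|lra|lra|lra|lra|].
by rewrite /bsum /= /Pc /dPc /ddPc /P6 /P7 /dP6 /dP7 /ddP6 /ddP7 /sgn /=; ring.
Qed.

Lemma iso_true_5 (c : R) : (595/1024) <= c -> c <= (597/1024) -> 0 < - ddPc true c.
Proof.
move=> h1 h2.
by apply: iso_true_5_0; lra.
Qed.

Lemma iso_true_6_0 (c : R) : (113/128) <= c -> c <= (453/512) -> 0 < ddPc true c.
Proof.
move=> h1 h2.
apply: (@bern (((137*1000+438)*1000+953)*1000+472) (512 * c - 452) (453 - 512 * c) _ [:: ((((100*1000+878)*1000+712)*1000+247)*1000+296); ((((507*1000+17)*1000+344)*1000+617)*1000+728); (((((1*1000+19)*1000+299)*1000+531)*1000+40)*1000+896); (((((1*1000+24)*1000+581)*1000+693)*1000+148)*1000+320); ((((514*1000+940)*1000+610)*1000+459)*1000+684); ((((103*1000+519)*1000+815)*1000+981)*1000+849)]);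
  [by repeat split; lra|by []|lra|lra|lra|lra|].
by rewrite /bsum /= /Pc /dPc /ddPc /P6 /P7 /dP6 /dP7 /ddP6 /ddP7 /sgn /=; ring.
Qed.

Lemma iso_true_6 (c : R) : (113/128) <= c -> c <= (453/512) -> 0 < ddPc true c.
Proof.
move=> h1 h2.
by apply: iso_true_6_0; lra.
Qed.

Lemma bnd_true_1_0 (c : R) : ((- 485)/512) <= c -> c <= ((- 121)/128) -> 0 < 7 - 4 * Pc true c.
Proof.
move=> h1 h2.
apply: (@bern (((((18*1000+14)*1000+398)*1000+509)*1000+481)*1000+984) (512 * c - (- 485)) ((- 484) - 512 * c) _ [:: (((((6*1000+531)*1000+335)*1000+589)*1000+552)*1000+717); (((((45*1000+667)*1000+182)*1000+106)*1000+136)*1000+860); (((((136*1000+892)*1000+420)*1000+3)*1000+38)*1000+864); (((((228*1000+50)*1000+585)*1000+273)*1000+240)*1000+256); (((((228*1000+25)*1000+39)*1000+628)*1000+834)*1000+560); (((((136*1000+846)*1000+123)*1000+62)*1000+268)*1000+928); (((((45*1000+641)*1000+111)*1000+825)*1000+756)*1000+160); (((((6*1000+526)*1000+16)*1000+605)*1000+536)*1000+256)]);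
  [by repeat split; lra|by []|lra|lra|lra|lra|].
by rewrite /bsum /= /Pc /dPc /ddPc /P6 /P7 /dP6 /dP7 /ddP6 /ddP7 /sgn /=; ring.
Qed.

Lemma bnd_true_1 (c : R) : ((- 485)/512) <= c -> c <= ((- 121)/128) -> 0 < 7 - 4 * Pc true c.
Proof.
move=> h1 h2.
by apply: bnd_true_1_0; lra.
Qed.

Lemma bnd_true_3_0 (c : R) : ((- 165)/512) <= c -> c <= ((- 41)/128) -> 0 < 47 - 10 * Pc true c.
Proof.
move=> h1 h2.
apply: (@bern (((((36*1000+28)*1000+797)*1000+18)*1000+963)*1000+968) (512 * c - (- 165)) ((- 164) - 512 * c) _ [:: (((((26*1000+626)*1000+731)*1000+955)*1000+618)*1000+241); (((((186*1000+293)*1000+536)*1000+333)*1000+638)*1000+92); (((((558*1000+676)*1000+977)*1000+956)*1000+838)*1000+96); (((((930*1000+917)*1000+440)*1000+154)*1000+120)*1000+640); (((((930*1000+835)*1000+88)*1000+148)*1000+591)*1000+360); (((((558*1000+528)*1000+729)*1000+153)*1000+545)*1000+216); (((((186*1000+211)*1000+159)*1000+6)*1000+113)*1000+792); (((((26*1000+610)*1000+251)*1000+425)*1000+857)*1000+536)]);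
  [by repeat split; lra|by []|lra|lra|lra|lra|].
by rewrite /bsum /= /Pc /dPc /ddPc /P6 /P7 /dP6 /dP7 /ddP6 /ddP7 /sgn /=; ring.
Qed.

Lemma bnd_true_3 (c : R) : ((- 165)/512) <= c -> c <= ((- 41)/128) -> 0 < 47 - 10 * Pc true c.
Proof.
move=> h1 h2.
by apply: bnd_true_3_0; lra.
Qed.

Lemma bnd_true_5_0 (c : R) : (595/1024) <= c -> c <= (597/1024) -> 0 < 31 - 4 * Pc true c.
Proof.
move=> h1 h2.
apply: (@bern ((((((295*1000+147)*1000+905)*1000+179)*1000+352)*1000+825)*1000+856) (1024 * c - 595) (597 - 1024 * c) _ [:: (((((464*1000+262)*1000+717)*1000+135)*1000+21)*1000+509); ((((((3*1000+246)*1000+350)*1000+997)*1000+957)*1000+104)*1000+581); ((((((9*1000+732)*1000+642)*1000+429)*1000+294)*1000+718)*1000+585); ((((((16*1000+217)*1000+149)*1000+534)*1000+926)*1000+870)*1000+313); ((((((16*1000+219)*1000+998)*1000+644)*1000+944)*1000+194)*1000+895); ((((((9*1000+737)*1000+775)*1000+108)*1000+459)*1000+756)*1000+207); ((((((3*1000+249)*1000+207)*1000+243)*1000+117)*1000+993)*1000+651); (((((464*1000+835)*1000+393)*1000+148)*1000+197)*1000+411)]);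
  [by repeat split; lra|by []|lra|lra|lra|lra|].
by rewrite /bsum /= /Pc /dPc /ddPc /P6 /P7 /dP6 /dP7 /ddP6 /ddP7 /sgn /=; ring.
Qed.

Lemma bnd_true_5 (c : R) : (595/1024) <= c -> c <= (597/1024) -> 0 < 31 - 4 * Pc true c.
Proof.
move=> h1 h2.
by apply: bnd_true_5_0; lra.
Qed.

Lemma Ppos_false_0 (c : R) : ((- 1)) <= c -> c <= ((- 3)/4) -> 0 < Pc false c.
Proof.
move=> h1 h2.
apply: (@bern 128 (4 * c - (- 4)) ((- 3) - 4 * c) _ [:: 128; 128; 992; (4*1000+608); (7*1000+840); (6*1000+300); (2*1000+450); 373]);
  [by repeat split; lra|by []|lra|lra|lra|lra|].
by rewrite /bsum /= /Pc /dPc /ddPc /P6 /P7 /dP6 /dP7 /ddP6 /ddP7 /sgn /=; ring.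
Qed.

Lemma Ppos_false_1 (c : R) : ((- 3)/4) <= c -> c <= ((- 1)/2) -> 0 < Pc false c.
Proof.
move=> h1 h2.
apply: (@bern 128 (4 * c - (- 3)) ((- 2) - 4 * c) _ [:: 373; (2*1000+772); (8*1000+232); (12*1000+600); (10*1000+768); (5*1000+152); (1*1000+280); 128]);
  [by repeat split; lra|by []|lra|lra|lra|lra|].
by rewrite /bsum /= /Pc /dPc /ddPc /P6 /P7 /dP6 /dP7 /ddP6 /ddP7 /sgn /=; ring.
Qed.

Lemma Ppos_false_2 (c : R) : ((- 1)/2) <= c -> c <= ((- 3)/8) -> 0 < Pc false c.
Proof.
move=> h1 h2.
apply: (@bern (16*1000+384) (8 * c - (- 4)) ((- 3) - 8 * c) _ [:: (16*1000+384); (90*1000+112); (201*1000+728); (234*1000+752); (149*1000+952); (50*1000+880); (8*1000+280); 599]);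
  [by repeat split; lra|by []|lra|lra|lra|lra|].
by rewrite /bsum /= /Pc /dPc /ddPc /P6 /P7 /dP6 /dP7 /ddP6 /ddP7 /sgn /=; ring.
Qed.

Lemma Ppos_false_3 (c : R) : ((- 3)/8) <= c -> c <= ((- 1)/4) -> 0 < Pc false c.
Proof.
move=> h1 h2.
apply: (@bern (16*1000+384) (8 * c - (- 3)) ((- 2) - 8 * c) _ [:: 599; 106; (1*1000+836); (29*1000+768); (80*1000+976); (93*1000+664); (50*1000+752); (10*1000+624)]);
  [by repeat split; lra|by []|lra|lra|lra|lra|].
by rewrite /bsum /= /Pc /dPc /ddPc /P6 /P7 /dP6 /dP7 /ddP6 /ddP7 /sgn /=; ring.
Qed.

Lemma Ppos_false_4 (c : R) : ((- 1)/4) <= c -> c <= (0) -> 0 < Pc false c.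
Proof.
move=> h1 h2.
apply: (@bern 128 (4 * c - (- 1)) (0 - 4 * c) _ [:: 83; 950; (4*1000+340); (10*1000+224); (13*1000+504); (10*1000+80); (3*1000+968); 640]);
  [by repeat split; lra|by []|lra|lra|lra|lra|].
by rewrite /bsum /= /Pc /dPc /ddPc /P6 /P7 /dP6 /dP7 /ddP6 /ddP7 /sgn /=; ring.
Qed.

Lemma Ppos_false_5 (c : R) : (0) <= c -> c <= (1/2) -> 0 < Pc false c.
Proof.
move=> h1 h2.
apply: (@bern 1 (2 * c - 0) (1 - 2 * c) _ [:: 5; 43; 144; 236; 195; 76; 13; 1]);
  [by repeat split; lra|by []|lra|lra|lra|lra|].
by rewrite /bsum /= /Pc /dPc /ddPc /P6 /P7 /dP6 /dP7 /ddP6 /ddP7 /sgn /=; ring.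
Qed.

Lemma Ppos_false_6 (c : R) : (1/2) <= c -> c <= (1) -> 0 < Pc false c.
Proof.
move=> h1 h2.
apply: (@bern 1 (2 * c - 1) (2 - 2 * c) _ [:: 1; 1; 4; 65; 196; 224; 91; 1]);
  [by repeat split; lra|by []|lra|lra|lra|lra|].
by rewrite /bsum /= /Pc /dPc /ddPc /P6 /P7 /dP6 /dP7 /ddP6 /ddP7 /sgn /=; ring.
Qed.

Lemma Ppos_false (c : R) : ((- 1)) <= c -> c <= (1) -> 0 < Pc false c.
Proof.
move=> h1 h2.
have [?|?] := leP c ((- 3)/4); first by apply: Ppos_false_0; lra.
have [?|?] := leP c ((- 1)/2); first by apply: Ppos_false_1; lra.
have [?|?] := leP c ((- 3)/8); first by apply: Ppos_false_2; lra.
have [?|?] := leP c ((- 1)/4); first by apply: Ppos_false_3; lra.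
have [?|?] := leP c (0); first by apply: Ppos_false_4; lra.
have [?|?] := leP c (1/2); first by apply: Ppos_false_5; lra.
by apply: Ppos_false_6; lra.
Qed.

Lemma gap_false_0_0 (c : R) : ((- 1)) <= c -> c <= ((- 981)/1024) -> 0 < - dPc false c.
Proof.
move=> h1 h2.
apply: (@bern ((((((((56*1000+937)*1000+776)*1000+543)*1000+900)*1000+44)*1000+894)*1000+404)*1000+608) (1024 * c - (- 1024)) ((- 981) - 1024 * c) _ [:: (((((216*1000+172)*1000+782)*1000+113)*1000+783)*1000+808); ((((((1*1000+21)*1000+683)*1000+796)*1000+715)*1000+503)*1000+616); ((((((1*1000+935)*1000+203)*1000+274)*1000+487)*1000+496)*1000+704); ((((((1*1000+840)*1000+771)*1000+913)*1000+756)*1000+966)*1000+912); (((((885*1000+633)*1000+600)*1000+699)*1000+236)*1000+352); (((((178*1000+376)*1000+396)*1000+253)*1000+563)*1000+904); (((((3*1000+822)*1000+493)*1000+675)*1000+58)*1000+911)]);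
  [by repeat split; lra|by []|lra|lra|lra|lra|].
by rewrite /bsum /= /Pc /dPc /ddPc /P6 /P7 /dP6 /dP7 /ddP6 /ddP7 /sgn /=; ring.
Qed.

Lemma gap_false_0 (c : R) : ((- 1)) <= c -> c <= ((- 981)/1024) -> 0 < - dPc false c.
Proof.
move=> h1 h2.
by apply: gap_false_0_0; lra.
Qed.

Lemma gap_false_1_0 (c : R) : ((- 979)/1024) <= c -> c <= ((- 183)/256) -> 0 < dPc false c.
Proof.
move=> h1 h2.
apply: (@bern ((((((((((2*1000+45)*1000+368)*1000+153)*1000+848)*1000+171)*1000+969)*1000+677)*1000+694)*1000+599)*1000+168) (1024 * c - (- 979)) ((- 732) - 1024 * c) _ [:: (((((3*1000+297)*1000+375)*1000+350)*1000+968)*1000+497); (((((885*1000+576)*1000+68)*1000+449)*1000+149)*1000+880); ((((((2*1000+718)*1000+150)*1000+503)*1000+662)*1000+730)*1000+96); ((((((3*1000+125)*1000+765)*1000+697)*1000+669)*1000+863)*1000+680); ((((((1*1000+590)*1000+237)*1000+152)*1000+885)*1000+1)*1000+984); (((((302*1000+661)*1000+40)*1000+338)*1000+57)*1000+216); ((((728*1000+204)*1000+185)*1000+604)*1000+96)]);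
  [by repeat split; lra|by []|lra|lra|lra|lra|].
by rewrite /bsum /= /Pc /dPc /ddPc /P6 /P7 /dP6 /dP7 /ddP6 /ddP7 /sgn /=; ring.
Qed.

Lemma gap_false_1 (c : R) : ((- 979)/1024) <= c -> c <= ((- 183)/256) -> 0 < dPc false c.
Proof.
move=> h1 h2.
by apply: gap_false_1_0; lra.
Qed.

Lemma gap_false_2_0 (c : R) : ((- 365)/512) <= c -> c <= ((- 183)/512) -> 0 < - dPc false c.
Proof.
move=> h1 h2.
apply: (@bern (((((((((5*1000+114)*1000+911)*1000+503)*1000+774)*1000+19)*1000+750)*1000+222)*1000+364)*1000+672) (512 * c - (- 365)) ((- 183) - 512 * c) _ [:: ((((26*1000+269)*1000+314)*1000+605)*1000+7); (((((6*1000+992)*1000+412)*1000+559)*1000+634)*1000+798); (((((31*1000+404)*1000+639)*1000+95)*1000+654)*1000+473); (((((45*1000+276)*1000+609)*1000+224)*1000+170)*1000+340); (((((26*1000+688)*1000+8)*1000+265)*1000+458)*1000+97); (((((5*1000+605)*1000+770)*1000+519)*1000+436)*1000+110); ((((10*1000+281)*1000+52)*1000+438)*1000+39)]);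
  [by repeat split; lra|by []|lra|lra|lra|lra|].
by rewrite /bsum /= /Pc /dPc /ddPc /P6 /P7 /dP6 /dP7 /ddP6 /ddP7 /sgn /=; ring.
Qed.

Lemma gap_false_2 (c : R) : ((- 365)/512) <= c -> c <= ((- 183)/512) -> 0 < - dPc false c.
Proof.
move=> h1 h2.
by apply: gap_false_2_0; lra.
Qed.

Lemma gap_false_3_0 (c : R) : ((- 91)/256) <= c -> c <= (37/256) -> 0 < dPc false c.
Proof.
move=> h1 h2.
apply: (@bern ((((((((9*1000+671)*1000+406)*1000+556)*1000+917)*1000+33)*1000+397)*1000+649)*1000+408) (256 * c - (- 91)) (37 - 256 * c) _ [:: (((315*1000+872)*1000+498)*1000+817); ((((124*1000+18)*1000+639)*1000+798)*1000+790); ((((649*1000+174)*1000+393)*1000+476)*1000+751); (((((1*1000+118)*1000+513)*1000+244)*1000+856)*1000+340); ((((710*1000+269)*1000+426)*1000+678)*1000+159); ((((148*1000+433)*1000+369)*1000+669)*1000+126); (((419*1000+236)*1000+92)*1000+801)]);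
  [by repeat split; lra|by []|lra|lra|lra|lra|].
by rewrite /bsum /= /Pc /dPc /ddPc /P6 /P7 /dP6 /dP7 /ddP6 /ddP7 /sgn /=; ring.
Qed.

Lemma gap_false_3 (c : R) : ((- 91)/256) <= c -> c <= (37/256) -> 0 < dPc false c.
Proof.
move=> h1 h2.
by apply: gap_false_3_0; lra.
Qed.

Lemma gap_false_4_0 (c : R) : (75/512) <= c -> c <= (577/1024) -> 0 < - dPc false c.
Proof.
move=> h1 h2.
apply: (@bern ((((((((((54*1000+595)*1000+521)*1000+699)*1000+288)*1000+901)*1000+192)*1000+747)*1000+411)*1000+570)*1000+688) (1024 * c - 150) (577 - 1024 * c) _ [:: ((((619*1000+36)*1000+486)*1000+510)*1000+528); (((((502*1000+814)*1000+757)*1000+407)*1000+133)*1000+120); ((((((2*1000+569)*1000+491)*1000+771)*1000+474)*1000+250)*1000+128); ((((((4*1000+673)*1000+421)*1000+862)*1000+251)*1000+396)*1000+896); ((((((3*1000+472)*1000+295)*1000+692)*1000+997)*1000+245)*1000+60); (((((824*1000+970)*1000+75)*1000+670)*1000+357)*1000+916); (((((1*1000+229)*1000+438)*1000+33)*1000+263)*1000+239)]);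
  [by repeat split; lra|by []|lra|lra|lra|lra|].
by rewrite /bsum /= /Pc /dPc /ddPc /P6 /P7 /dP6 /dP7 /ddP6 /ddP7 /sgn /=; ring.
Qed.

Lemma gap_false_4 (c : R) : (75/512) <= c -> c <= (577/1024) -> 0 < - dPc false c.
Proof.
move=> h1 h2.
by apply: gap_false_4_0; lra.
Qed.

Lemma gap_false_5_0 (c : R) : (579/1024) <= c -> c <= (455/512) -> 0 < dPc false c.
Proof.
move=> h1 h2.
apply: (@bern ((((((((((11*1000+845)*1000+618)*1000+260)*1000+74)*1000+422)*1000+911)*1000+42)*1000+848)*1000+817)*1000+152) (1024 * c - 579) (910 - 1024 * c) _ [:: (((((2*1000+613)*1000+848)*1000+526)*1000+767)*1000+249); (((((654*1000+15)*1000+384)*1000+358)*1000+933)*1000+980); ((((((3*1000+603)*1000+450)*1000+135)*1000+970)*1000+163)*1000+292); ((((((7*1000+454)*1000+387)*1000+642)*1000+858)*1000+486)*1000+560); ((((((6*1000+824)*1000+257)*1000+616)*1000+903)*1000+464)*1000+688); ((((((2*1000+335)*1000+933)*1000+185)*1000+224)*1000+325)*1000+568); (((((4*1000+808)*1000+716)*1000+348)*1000+72)*1000+512)]);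
  [by repeat split; lra|by []|lra|lra|lra|lra|].
by rewrite /bsum /= /Pc /dPc /ddPc /P6 /P7 /dP6 /dP7 /ddP6 /ddP7 /sgn /=; ring.
Qed.

Lemma gap_false_5 (c : R) : (579/1024) <= c -> c <= (455/512) -> 0 < dPc false c.
Proof.
move=> h1 h2.
by apply: gap_false_5_0; lra.
Qed.

Lemma gap_false_6_0 (c : R) : (57/64) <= c -> c <= (1) -> 0 < - dPc false c.
Proof.
move=> h1 h2.
apply: (@bern ((((9*1000+23)*1000+189)*1000+417)*1000+984) (64 * c - 57) (64 - 64 * c) _ [:: ((79*1000+246)*1000+417); (((7*1000+290)*1000+246)*1000+336); (((39*1000+986)*1000+457)*1000+600); (((89*1000+765)*1000+445)*1000+632); (((101*1000+214)*1000+846)*1000+976); (((57*1000+109)*1000+643)*1000+264); (((12*1000+884)*1000+901)*1000+888)]);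
  [by repeat split; lra|by []|lra|lra|lra|lra|].
by rewrite /bsum /= /Pc /dPc /ddPc /P6 /P7 /dP6 /dP7 /ddP6 /ddP7 /sgn /=; ring.
Qed.

Lemma gap_false_6 (c : R) : (57/64) <= c -> c <= (1) -> 0 < - dPc false c.
Proof.
move=> h1 h2.
by apply: gap_false_6_0; lra.
Qed.

Lemma iso_false_1_0 (c : R) : ((- 981)/1024) <= c -> c <= ((- 979)/1024) -> 0 < ddPc false c.
Proof.
move=> h1 h2.
apply: (@bern ((((140*1000+737)*1000+488)*1000+355)*1000+328) (1024 * c - (- 981)) ((- 979) - 1024 * c) _ [:: (((((1*1000+807)*1000+458)*1000+537)*1000+246)*1000+633); (((((8*1000+982)*1000+31)*1000+437)*1000+388)*1000+59); (((((17*1000+853)*1000+959)*1000+328)*1000+875)*1000+898); (((((17*1000+744)*1000+273)*1000+505)*1000+890)*1000+390); (((((8*1000+817)*1000+502)*1000+89)*1000+997)*1000+357); (((((1*1000+752)*1000+615)*1000+12)*1000+840)*1000+767)]);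
  [by repeat split; lra|by []|lra|lra|lra|lra|].
by rewrite /bsum /= /Pc /dPc /ddPc /P6 /P7 /dP6 /dP7 /ddP6 /ddP7 /sgn /=; ring.
Qed.

Lemma iso_false_1 (c : R) : ((- 981)/1024) <= c -> c <= ((- 979)/1024) -> 0 < ddPc false c.
Proof.
move=> h1 h2.
by apply: iso_false_1_0; lra.
Qed.

Lemma iso_false_2_0 (c : R) : ((- 183)/256) <= c -> c <= ((- 365)/512) -> 0 < - ddPc false c.
Proof.
move=> h1 h2.
apply: (@bern (((137*1000+438)*1000+953)*1000+472) (512 * c - (- 366)) ((- 365) - 512 * c) _ [:: ((((18*1000+869)*1000+674)*1000+546)*1000+80); ((((94*1000+258)*1000+370)*1000+626)*1000+224); ((((188*1000+333)*1000+960)*1000+649)*1000+360); ((((188*1000+148)*1000+421)*1000+573)*1000+16); ((((93*1000+980)*1000+70)*1000+937)*1000+858); ((((18*1000+776)*1000+913)*1000+934)*1000+79)]);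
  [by repeat split; lra|by []|lra|lra|lra|lra|].
by rewrite /bsum /= /Pc /dPc /ddPc /P6 /P7 /dP6 /dP7 /ddP6 /ddP7 /sgn /=; ring.
Qed.

Lemma iso_false_2 (c : R) : ((- 183)/256) <= c -> c <= ((- 365)/512) -> 0 < - ddPc false c.
Proof.
move=> h1 h2.
by apply: iso_false_2_0; lra.
Qed.

Lemma iso_false_3_0 (c : R) : ((- 183)/512) <= c -> c <= ((- 91)/256) -> 0 < ddPc false c.
Proof.
move=> h1 h2.
apply: (@bern (((137*1000+438)*1000+953)*1000+472) (512 * c - (- 183)) ((- 182) - 512 * c) _ [:: ((((15*1000+231)*1000+0)*1000+562)*1000+659); ((((76*1000+190)*1000+826)*1000+643)*1000+302); ((((152*1000+451)*1000+901)*1000+773)*1000+624); ((((152*1000+520)*1000+751)*1000+453)*1000+360); ((((76*1000+294)*1000+101)*1000+361)*1000+136); ((((15*1000+265)*1000+425)*1000+600)*1000+736)]);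
  [by repeat split; lra|by []|lra|lra|lra|lra|].
by rewrite /bsum /= /Pc /dPc /ddPc /P6 /P7 /dP6 /dP7 /ddP6 /ddP7 /sgn /=; ring.
Qed.

Lemma iso_false_3 (c : R) : ((- 183)/512) <= c -> c <= ((- 91)/256) -> 0 < ddPc false c.
Proof.
move=> h1 h2.
by apply: iso_false_3_0; lra.
Qed.

Lemma iso_false_4_0 (c : R) : (37/256) <= c -> c <= (75/512) -> 0 < - ddPc false c.
Proof.
move=> h1 h2.
apply: (@bern (((137*1000+438)*1000+953)*1000+472) (512 * c - 74) (75 - 512 * c) _ [:: ((((18*1000+239)*1000+744)*1000+139)*1000+40); ((((91*1000+223)*1000+729)*1000+367)*1000+344); ((((182*1000+496)*1000+64)*1000+933)*1000+840); ((((182*1000+543)*1000+257)*1000+686)*1000+936); ((((91*1000+294)*1000+517)*1000+358)*1000+138); ((((18*1000+263)*1000+339)*1000+376)*1000+759)]);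
  [by repeat split; lra|by []|lra|lra|lra|lra|].
by rewrite /bsum /= /Pc /dPc /ddPc /P6 /P7 /dP6 /dP7 /ddP6 /ddP7 /sgn /=; ring.
Qed.

Lemma iso_false_4 (c : R) : (37/256) <= c -> c <= (75/512) -> 0 < - ddPc false c.
Proof.
move=> h1 h2.
by apply: iso_false_4_0; lra.
Qed.

Lemma iso_false_5_0 (c : R) : (577/1024) <= c -> c <= (579/1024) -> 0 < ddPc false c.
Proof.
move=> h1 h2.
apply: (@bern ((((140*1000+737)*1000+488)*1000+355)*1000+328) (1024 * c - 577) (579 - 1024 * c) _ [:: ((((957*1000+369)*1000+376)*1000+429)*1000+483); (((((4*1000+793)*1000+802)*1000+584)*1000+365)*1000+445); (((((9*1000+601)*1000+440)*1000+226)*1000+972)*1000+702); (((((9*1000+615)*1000+198)*1000+384)*1000+696)*1000+666); (((((4*1000+814)*1000+439)*1000+542)*1000+697)*1000+351); ((((964*1000+248)*1000+177)*1000+36)*1000+753)]);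
  [by repeat split; lra|by []|lra|lra|lra|lra|].
by rewrite /bsum /= /Pc /dPc /ddPc /P6 /P7 /dP6 /dP7 /ddP6 /ddP7 /sgn /=; ring.
Qed.

Lemma iso_false_5 (c : R) : (577/1024) <= c -> c <= (579/1024) -> 0 < ddPc false c.
Proof.
move=> h1 h2.
by apply: iso_false_5_0; lra.
Qed.

Lemma iso_false_6_0 (c : R) : (455/512) <= c -> c <= (57/64) -> 0 < - ddPc false c.
Proof.
move=> h1 h2.
apply: (@bern (((137*1000+438)*1000+953)*1000+472) (512 * c - 455) (456 - 512 * c) _ [:: ((((108*1000+906)*1000+763)*1000+932)*1000+19); ((((547*1000+262)*1000+480)*1000+841)*1000+992); (((((1*1000+99)*1000+999)*1000+969)*1000+197)*1000+952); (((((1*1000+105)*1000+492)*1000+707)*1000+738)*1000+624); ((((555*1000+501)*1000+611)*1000+642)*1000+880); ((((111*1000+653)*1000+156)*1000+192)*1000+256)]);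
  [by repeat split; lra|by []|lra|lra|lra|lra|].
by rewrite /bsum /= /Pc /dPc /ddPc /P6 /P7 /dP6 /dP7 /ddP6 /ddP7 /sgn /=; ring.
Qed.

Lemma iso_false_6 (c : R) : (455/512) <= c -> c <= (57/64) -> 0 < - ddPc false c.
Proof.
move=> h1 h2.
by apply: iso_false_6_0; lra.
Qed.

Lemma bnd_false_2_0 (c : R) : ((- 183)/256) <= c -> c <= ((- 365)/512) -> 0 < 31 - 10 * Pc false c.
Proof.
move=> h1 h2.
apply: (@bern (((((36*1000+28)*1000+797)*1000+18)*1000+963)*1000+968) (512 * c - (- 366)) ((- 365) - 512 * c) _ [:: (((((34*1000+783)*1000+520)*1000+264)*1000+998)*1000+528); (((((243*1000+427)*1000+750)*1000+902)*1000+989)*1000+376); (((((730*1000+206)*1000+928)*1000+225)*1000+697)*1000+568); ((((((1*1000+217)*1000+41)*1000+436)*1000+855)*1000+88)*1000+720); ((((((1*1000+217)*1000+228)*1000+271)*1000+634)*1000+555)*1000+960); (((((730*1000+543)*1000+138)*1000+59)*1000+200)*1000+428); (((((243*1000+614)*1000+431)*1000+69)*1000+535)*1000+46); (((((34*1000+820)*1000+825)*1000+377)*1000+508)*1000+583)]);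
  [by repeat split; lra|by []|lra|lra|lra|lra|].
by rewrite /bsum /= /Pc /dPc /ddPc /P6 /P7 /dP6 /dP7 /ddP6 /ddP7 /sgn /=; ring.
Qed.

Lemma bnd_false_2 (c : R) : ((- 183)/256) <= c -> c <= ((- 365)/512) -> 0 < 31 - 10 * Pc false c.
Proof.
move=> h1 h2.
by apply: bnd_false_2_0; lra.
Qed.

Lemma bnd_false_4_0 (c : R) : (37/256) <= c -> c <= (75/512) -> 0 < 127 - 20 * Pc false c.
Proof.
move=> h1 h2.
apply: (@bern (((((18*1000+14)*1000+398)*1000+509)*1000+481)*1000+984) (512 * c - 74) (75 - 512 * c) _ [:: (((((26*1000+82)*1000+486)*1000+133)*1000+186)*1000+688); (((((182*1000+443)*1000+247)*1000+382)*1000+610)*1000+496); (((((547*1000+18)*1000+474)*1000+219)*1000+437)*1000+728); (((((911*1000+330)*1000+716)*1000+700)*1000+685)*1000+520); (((((911*1000+116)*1000+56)*1000+423)*1000+86)*1000+360); (((((546*1000+632)*1000+109)*1000+316)*1000+135)*1000+788); (((((182*1000+228)*1000+626)*1000+431)*1000+925)*1000+966); (((((26*1000+39)*1000+569)*1000+808)*1000+204)*1000+943)]);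
  [by repeat split; lra|by []|lra|lra|lra|lra|].
by rewrite /bsum /= /Pc /dPc /ddPc /P6 /P7 /dP6 /dP7 /ddP6 /ddP7 /sgn /=; ring.
Qed.

Lemma bnd_false_4 (c : R) : (37/256) <= c -> c <= (75/512) -> 0 < 127 - 20 * Pc false c.
Proof.
move=> h1 h2.
by apply: bnd_false_4_0; lra.
Qed.

Lemma bnd_false_6_0 (c : R) : (455/512) <= c -> c <= (57/64) -> 0 < 35 - 4 * Pc false c.
Proof.
move=> h1 h2.
apply: (@bern (((((18*1000+14)*1000+398)*1000+509)*1000+481)*1000+984) (512 * c - 455) (456 - 512 * c) _ [:: (((((6*1000+453)*1000+656)*1000+860)*1000+131)*1000+895); (((((45*1000+100)*1000+461)*1000+827)*1000+984)*1000+632); (((((135*1000+184)*1000+883)*1000+669)*1000+70)*1000+16); (((((225*1000+296)*1000+390)*1000+583)*1000+924)*1000+224); (((((225*1000+467)*1000+975)*1000+47)*1000+598)*1000+80); (((((135*1000+494)*1000+284)*1000+977)*1000+537)*1000+24); (((((45*1000+272)*1000+961)*1000+749)*1000+614)*1000+592); (((((6*1000+488)*1000+339)*1000+936)*1000+968)*1000+704)]);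
  [by repeat split; lra|by []|lra|lra|lra|lra|].
by rewrite /bsum /= /Pc /dPc /ddPc /P6 /P7 /dP6 /dP7 /ddP6 /ddP7 /sgn /=; ring.
Qed.

Lemma bnd_false_6 (c : R) : (455/512) <= c -> c <= (57/64) -> 0 < 35 - 4 * Pc false c.
Proof.
move=> h1 h2.
by apply: bnd_false_6_0; lra.
Qed.



Lemma nat7 (P : nat -> Prop) : P 1%N -> P 2%N -> P 3%N -> P 4%N -> P 5%N -> P 6%N ->
  forall j, (0 < j < 7)%N -> P j.
Proof. by move=> ? ? ? ? ? ?; case=> [|[|[|[|[|[|[|j]]]]]]]. Qed.

Lemma nat07 (P : nat -> Prop) : P 0%N -> P 1%N -> P 2%N -> P 3%N -> P 4%N -> P 5%N -> P 6%N ->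
  forall j, (j < 7)%N -> P j.
Proof. by move=> ? ? ? ? ? ? ?; case=> [|[|[|[|[|[|[|j]]]]]]]. Qed.



Lemma c_data_true : exists rho : nat -> R, [/\ rho 0%N = -1, rho 7%N = 1,
  (forall j, (j < 7)%N -> rho j < rho j.+1),
  (forall j, (j < 7)%N -> forall x y, rho j <= x -> x < y -> y <= rho j.+1 ->
     if odd j != true then Pc true x < Pc true y else Pc true y < Pc true x) &
  bound14 true rho].
Proof.
pose A := fun j => nth (0:R) [:: 0; ((- 485)/512); ((- 381)/512); ((- 165)/512); (117/1024); (595/1024); (113/128); 1] j.
pose B := fun j => nth (0:R) [:: -1; ((- 121)/128); ((- 95)/128); ((- 41)/128); (119/1024); (597/1024); (453/512); 0] j.
have hAB : forall j, (0 < j < 7)%N -> A j < B j.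
  by apply: nat7; rewrite /A /B /=; lra.
have hBA : forall j, (j < 7)%N -> B j < A j.+1.
  by apply: nat07; rewrite /A /B /=; lra.
have hgap : forall j, (j < 7)%N -> forall c, B j <= c -> c <= A j.+1 -> sg (odd j != true) (dPc true c).
  apply: nat07 => c; rewrite /A /B /sg /= => h1 h2;
  [ have := @gap_true_0 c ltac:(lra) ltac:(lra); lra | have := @gap_true_1 c ltac:(lra) ltac:(lra); lra | have := @gap_true_2 c ltac:(lra) ltac:(lra); lra | have := @gap_true_3 c ltac:(lra) ltac:(lra); lra | have := @gap_true_4 c ltac:(lra) ltac:(lra); lra | have := @gap_true_5 c ltac:(lra) ltac:(lra); lra | have := @gap_true_6 c ltac:(lra) ltac:(lra); lra ].
have hiso : forall j, (0 < j < 7)%N -> forall c, A j <= c -> c <= B j -> sg (odd j != true) (ddPc true c).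
  apply: nat7 => c; rewrite /A /B /sg /= => h1 h2;
  [ have := @iso_true_1 c ltac:(lra) ltac:(lra); lra | have := @iso_true_2 c ltac:(lra) ltac:(lra); lra | have := @iso_true_3 c ltac:(lra) ltac:(lra); lra | have := @iso_true_4 c ltac:(lra) ltac:(lra); lra | have := @iso_true_5 c ltac:(lra) ltac:(lra); lra | have := @iso_true_6 c ltac:(lra) ltac:(lra); lra ].
have [rho [r0 r7 rin rinc rmono]] := @c_structure true (Pc true) (dPc true) (ddPc true) A B
  (Pc_deriv true) (dPc_deriv true) erefl erefl hAB hBA hgap hiso.
exists rho; split; [exact: r0 | exact: r7 | exact: rinc | exact: rmono | ].
have [a1 b1] : A 1%N < rho 1%N /\ rho 1%N < B 1%N by apply/andP; exact: rin.
rewrite /A /B /= in a1 b1.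
have q1 : 0 < Pc true (rho 1%N) by apply: Ppos_true; clear -a1 b1; lra.
have m1 : 0 < 7 - 4 * Pc true (rho 1%N) by apply: bnd_true_1; clear -a1 b1; lra.
clear a1 b1.
have [a2 b2] : A 2%N < rho 2%N /\ rho 2%N < B 2%N by apply/andP; exact: rin.
rewrite /A /B /= in a2 b2.
have q2 : 0 < Pc true (rho 2%N) by apply: Ppos_true; clear -a2 b2; lra.
clear a2 b2.
have [a3 b3] : A 3%N < rho 3%N /\ rho 3%N < B 3%N by apply/andP; exact: rin.
rewrite /A /B /= in a3 b3.
have q3 : 0 < Pc true (rho 3%N) by apply: Ppos_true; clear -a3 b3; lra.
have m3 : 0 < 47 - 10 * Pc true (rho 3%N) by apply: bnd_true_3; clear -a3 b3; lra.
clear a3 b3.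
have [a4 b4] : A 4%N < rho 4%N /\ rho 4%N < B 4%N by apply/andP; exact: rin.
rewrite /A /B /= in a4 b4.
have q4 : 0 < Pc true (rho 4%N) by apply: Ppos_true; clear -a4 b4; lra.
clear a4 b4.
have [a5 b5] : A 5%N < rho 5%N /\ rho 5%N < B 5%N by apply/andP; exact: rin.
rewrite /A /B /= in a5 b5.
have q5 : 0 < Pc true (rho 5%N) by apply: Ppos_true; clear -a5 b5; lra.
have m5 : 0 < 31 - 4 * Pc true (rho 5%N) by apply: bnd_true_5; clear -a5 b5; lra.
clear a5 b5.
have [a6 b6] : A 6%N < rho 6%N /\ rho 6%N < B 6%N by apply/andP; exact: rin.
rewrite /A /B /= in a6 b6.
have q6 : 0 < Pc true (rho 6%N) by apply: Ppos_true; clear -a6 b6; lra.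
clear a6 b6.
have v0 : Pc true (rho 0%N) = Pc true (-1) by rewrite r0.
have v7 : Pc true (rho 7%N) = Pc true 1 by rewrite r7.
have w0 : Pc true (-1) = 1 by rewrite /Pc /P6 /P7 /sgn /=; ring.
have w7 : Pc true 1 = 9 by rewrite /Pc /P6 /P7 /sgn /=; ring.
clear hAB hBA hgap hiso rmono rinc rin.
rewrite /bound14 /W /index_iota /= !big_cons !big_nil /= v0 v7 w0 w7.
lra.
Qed.


Lemma c_data_false : exists rho : nat -> R, [/\ rho 0%N = -1, rho 7%N = 1,
  (forall j, (j < 7)%N -> rho j < rho j.+1),
  (forall j, (j < 7)%N -> forall x y, rho j <= x -> x < y -> y <= rho j.+1 ->
     if odd j != false then Pc false x < Pc false y else Pc false y < Pc false x) &
  bound14 false rho].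
Proof.
pose A := fun j => nth (0:R) [:: 0; ((- 981)/1024); ((- 183)/256); ((- 183)/512); (37/256); (577/1024); (455/512); 1] j.
pose B := fun j => nth (0:R) [:: -1; ((- 979)/1024); ((- 365)/512); ((- 91)/256); (75/512); (579/1024); (57/64); 0] j.
have hAB : forall j, (0 < j < 7)%N -> A j < B j.
  by apply: nat7; rewrite /A /B /=; lra.
have hBA : forall j, (j < 7)%N -> B j < A j.+1.
  by apply: nat07; rewrite /A /B /=; lra.
have hgap : forall j, (j < 7)%N -> forall c, B j <= c -> c <= A j.+1 -> sg (odd j != false) (dPc false c).
  apply: nat07 => c; rewrite /A /B /sg /= => h1 h2;
  [ have := @gap_false_0 c ltac:(lra) ltac:(lra); lra | have := @gap_false_1 c ltac:(lra) ltac:(lra); lra | have := @gap_false_2 c ltac:(lra) ltac:(lra); lra | have := @gap_false_3 c ltac:(lra) ltac:(lra); lra | have := @gap_false_4 c ltac:(lra) ltac:(lra); lra | have := @gap_false_5 c ltac:(lra) ltac:(lra); lra | have := @gap_false_6 c ltac:(lra) ltac:(lra); lra ].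
have hiso : forall j, (0 < j < 7)%N -> forall c, A j <= c -> c <= B j -> sg (odd j != false) (ddPc false c).
  apply: nat7 => c; rewrite /A /B /sg /= => h1 h2;
  [ have := @iso_false_1 c ltac:(lra) ltac:(lra); lra | have := @iso_false_2 c ltac:(lra) ltac:(lra); lra | have := @iso_false_3 c ltac:(lra) ltac:(lra); lra | have := @iso_false_4 c ltac:(lra) ltac:(lra); lra | have := @iso_false_5 c ltac:(lra) ltac:(lra); lra | have := @iso_false_6 c ltac:(lra) ltac:(lra); lra ].
have [rho [r0 r7 rin rinc rmono]] := @c_structure false (Pc false) (dPc false) (ddPc false) A B
  (Pc_deriv false) (dPc_deriv false) erefl erefl hAB hBA hgap hiso.
exists rho; split; [exact: r0 | exact: r7 | exact: rinc | exact: rmono | ].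
have [a1 b1] : A 1%N < rho 1%N /\ rho 1%N < B 1%N by apply/andP; exact: rin.
rewrite /A /B /= in a1 b1.
have q1 : 0 < Pc false (rho 1%N) by apply: Ppos_false; clear -a1 b1; lra.
clear a1 b1.
have [a2 b2] : A 2%N < rho 2%N /\ rho 2%N < B 2%N by apply/andP; exact: rin.
rewrite /A /B /= in a2 b2.
have q2 : 0 < Pc false (rho 2%N) by apply: Ppos_false; clear -a2 b2; lra.
have m2 : 0 < 31 - 10 * Pc false (rho 2%N) by apply: bnd_false_2; clear -a2 b2; lra.
clear a2 b2.
have [a3 b3] : A 3%N < rho 3%N /\ rho 3%N < B 3%N by apply/andP; exact: rin.
rewrite /A /B /= in a3 b3.
have q3 : 0 < Pc false (rho 3%N) by apply: Ppos_false; clear -a3 b3; lra.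
clear a3 b3.
have [a4 b4] : A 4%N < rho 4%N /\ rho 4%N < B 4%N by apply/andP; exact: rin.
rewrite /A /B /= in a4 b4.
have q4 : 0 < Pc false (rho 4%N) by apply: Ppos_false; clear -a4 b4; lra.
have m4 : 0 < 127 - 20 * Pc false (rho 4%N) by apply: bnd_false_4; clear -a4 b4; lra.
clear a4 b4.
have [a5 b5] : A 5%N < rho 5%N /\ rho 5%N < B 5%N by apply/andP; exact: rin.
rewrite /A /B /= in a5 b5.
have q5 : 0 < Pc false (rho 5%N) by apply: Ppos_false; clear -a5 b5; lra.
clear a5 b5.
have [a6 b6] : A 6%N < rho 6%N /\ rho 6%N < B 6%N by apply/andP; exact: rin.
rewrite /A /B /= in a6 b6.
have q6 : 0 < Pc false (rho 6%N) by apply: Ppos_false; clear -a6 b6; lra.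
have m6 : 0 < 35 - 4 * Pc false (rho 6%N) by apply: bnd_false_6; clear -a6 b6; lra.
clear a6 b6.
have v0 : Pc false (rho 0%N) = Pc false (-1) by rewrite r0.
have v7 : Pc false (rho 7%N) = Pc false 1 by rewrite r7.
have w0 : Pc false (-1) = 1 by rewrite /Pc /P6 /P7 /sgn /=; ring.
have w7 : Pc false 1 = 1 by rewrite /Pc /P6 /P7 /sgn /=; ring.
clear hAB hBA hgap hiso rmono rinc rin.
rewrite /bound14 /W /index_iota /= !big_cons !big_nil /= v0 v7 w0 w7.
lra.
Qed.

End G.
Unset Implicit Arguments.

Theorem corollary2 (R : realType) (s : bool) :
  (forall t : R, 0 < t ->
     exists2 Z : seq R, uniq Z /\ (forall x, x \in Z <-> local_max_T (@Gpm R s) x) &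
       (total_variation 0 1 (fun x : R => powR (Gpm s x) t)
          < (2 * \sum_(z <- Z) powR (Gpm s z) t)%:E)%E)
  /\ (total_variation 0 1 (@Gpm R s) < 74%:E)%E.
Proof.
case: s.
- have [rho [r0 r7 rinc rmono hb]] := @c_data_true R.
  apply: (main_gen r0 r7 rinc rmono hb).
  by move=> c h1 h2; apply: Ppos_true.
- have [rho [r0 r7 rinc rmono hb]] := @c_data_false R.
  apply: (main_gen r0 r7 rinc rmono hb).
  by move=> c h1 h2; apply: Ppos_false.
Qed.
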